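(* Let $0<\alpha<1$ and let $p:\mathbb{R}\to\mathbb{R}$ be Lipschitz-continuous with $p_2\le p(t)\le p_1<0$ for all $t\in\mathbb{R}$, for some constants $p_2\le p_1<0$. For every $n\in\mathbb{N}$ there exists $\gamma_n>0$ such that, for all real $t_0$ and $v_0>\gamma_n$, the unique bouncing solution $u$ of $\ddot u-\frac{1}{u^\alpha}=p(t)$ with $u(t_0)=0$ and $\dot u(t_0^+)=v_0$, continued forward in time by reflecting the velocity at each collision, has at least $n$ impacts (zeros) with the singularity $u=0$ after $t_0$.
   Context: Let $\eta=((\alpha-1)p_1)^{-1/\alpha}$. For any $s$ and any $w>\sqrt{2(p_1-p_2)\eta}$ there is a unique maximal solution of the equation on an interval $(s,s')$, $s'<\infty$, with $u(t)\to0$ as $t\to s^+$ and $t\to s'^-$, $\dot u(s^+)=w$ and finite $\dot u(s'^-)<0$. A bouncing solution is a continuous function $u\ge0$ such that its zero set $Z$ is discrete, $u$ is $C^2$ and solves the equation on each open interval disjoint from $Z$, and at each $t_*\in Z$ the one-sided limits $\dot u(t_*^\pm)$ exist with $\dot u(t_*^+)=-\dot u(t_*^-)$ (elastic collision). The forward continuation from $(t_0,v_0)$ concatenates such maximal solutions, restarting at each collision time $t_*$ with velocity $-\dot u(t_*^-)$, as long as this velocity exceeds $\sqrt{2(p_1-p_2)\eta}$. *)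

(* Defs.v *)
From Stdlib Require Import Reals.
From Coquelicot Require Import Coquelicot.
Open Scope R_scope.

Definition eta (alpha p1 : R) : R := Rpower ((alpha - 1) * p1) (- / alpha).

Definition vthr (alpha p1 p2 : R) : R := sqrt (2 * (p1 - p2) * eta alpha p1).

Definition solves_on (alpha : R) (p u v : R -> R) (a b : R) : Prop :=
  forall t, a < t < b ->
    0 < u t /\ is_derive u t (v t) /\
    is_derive v t (/ Rpower (u t) alpha + p t).

(* The forward bouncing continuation from (t0, v0) up to its n-th impact after
   t0: impact times t0 = s 0 < s 1 < ... < s n, on each (s i, s (i+1)) u is a
   maximal solution vanishing at both ends with finite one-sided velocities
   (negative at the right end), velocity v0 at t0+, and at every intermediate
   collision s i (1 <= i < n) elastic reflection v(s i+) = - v(s i-), with the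
   restart velocity above the threshold sqrt(2 (p1-p2) eta). *)
Definition bouncing_chain (alpha p1 p2 : R) (p : R -> R) (t0 v0 : R) (n : nat)
  (u v : R -> R) (s : nat -> R) : Prop :=
  s 0%nat = t0 /\
  (forall i, (i < n)%nat -> s i < s (S i)) /\
  (forall i, (i <= n)%nat -> u (s i) = 0) /\
  (forall i, (i < n)%nat ->
     solves_on alpha p u v (s i) (s (S i)) /\
     filterlim u (at_right (s i)) (locally 0) /\
     filterlim u (at_left (s (S i))) (locally 0) /\
     (exists w_in w_out : R,
        filterlim v (at_right (s i)) (locally w_in) /\
        filterlim v (at_left (s (S i))) (locally w_out) /\ w_out < 0)) /\
  filterlim v (at_right t0) (locally v0) /\
  (forall i, (1 <= i < n)%nat ->
     exists w : R,
       filterlim v (at_left (s i)) (locally w) /\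
       filterlim v (at_right (s i)) (locally (- w)) /\
       vthr alpha p1 p2 < - w).

(* Main.v *)
Require Import Defs.
From Stdlib Require Import Reals Lra Lia Psatz ClassicalEpsilon Ranalysis5.
From Coquelicot Require Import Coquelicot.
Open Scope R_scope.

Lemma cont_eps (f : R -> R) x :
  (forall e, 0 < e -> exists d, 0 < d /\ forall y, Rabs (y - x) < d -> Rabs (f y - f x) < e) ->
  continuous f x.
Proof.
  intros H. unfold continuous. apply filterlim_locally. intros [e He].
  destruct (H e He) as [d [Hd Hy]].
  exists (mkposreal d Hd). intros y Hb. apply Hy. exact Hb.
Qed.

Lemma eps_cont (f : R -> R) x : continuous f x ->
  forall e, 0 < e -> exists d, 0 < d /\ forall y, Rabs (y - x) < d -> Rabs (f y - f x) < e.
Proof.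
  intros H e He.
  destruct (proj1 (filterlim_locally _ _) H (mkposreal e He)) as [[d Hd] Hy].
  exists d; split; [exact Hd|]. intros y Hyx. now apply (Hy y).
Qed.


Lemma exR (f : R -> R) a b : (forall x, continuous f x) -> ex_RInt f a b.
Proof. intros H. apply (ex_RInt_continuous (V:=R_CompleteNormedModule)). intros; apply H. Qed.

Lemma cont_lip3 (G : R -> R -> R -> R) (L : R) (a b c : R -> R) x :
  0 <= L ->
  (forall a1 a2 a3 b1 b2 b3, Rabs (G a1 a2 a3 - G b1 b2 b3) <= L * (Rabs (a1 - b1) + Rabs (a2 - b2) + Rabs (a3 - b3))) ->
  continuous a x -> continuous b x -> continuous c x ->
  continuous (fun t => G (a t) (b t) (c t)) x.
Proof.
  intros HL HG Ha Hb Hc. apply cont_eps. intros e He.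
  set (e' := e / (3 * (L + 1))).
  assert (He' : 0 < e') by (unfold e'; apply Rdiv_lt_0_compat; lra).
  destruct (eps_cont _ _ Ha e' He') as [d1 [Hd1 H1]].
  destruct (eps_cont _ _ Hb e' He') as [d2 [Hd2 H2]].
  destruct (eps_cont _ _ Hc e' He') as [d3 [Hd3 H3]].
  exists (Rmin d1 (Rmin d2 d3)). split.
  { apply Rmin_pos; auto. apply Rmin_pos; auto. }
  intros y Hy.
  assert (Hy1 : Rabs (y - x) < d1) by (eapply Rlt_le_trans; [exact Hy| apply Rmin_l]).
  assert (Hy2 : Rabs (y - x) < d2) by (eapply Rlt_le_trans; [exact Hy| eapply Rle_trans; [apply Rmin_r| apply Rmin_l]]).
  assert (Hy3 : Rabs (y - x) < d3) by (eapply Rlt_le_trans; [exact Hy| eapply Rle_trans; [apply Rmin_r| apply Rmin_r]]).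
  specialize (H1 y Hy1). specialize (H2 y Hy2). specialize (H3 y Hy3).
  eapply Rle_lt_trans. apply HG.
  assert (L * (Rabs (a y - a x) + Rabs (b y - b x) + Rabs (c y - c x)) <= L * (3 * e')).
  { apply Rmult_le_compat_l; lra. }
  assert (L * (3 * e') < e).
  { unfold e'. replace (L * (3 * (e / (3 * (L + 1))))) with (e * (L / (L+1))) by (field; lra).
    assert (L / (L+1) < 1). { apply (Rmult_lt_reg_r (L+1)); [lra|]. unfold Rdiv. rewrite Rmult_assoc, Rinv_l; lra. }
    nra. }
  lra.
Qed.

Lemma small_geo (c e : R) : 0 < e -> exists k : nat, c / 2 ^ k < e.
Proof.
  intros He.
  assert (Hk : forall k, INR k <= 2 ^ k).
  { induction k. simpl; lra. rewrite S_INR. simpl.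
    assert (1 <= 2 ^ k) by (apply pow_R1_Rle; lra). lra. }
  destruct (archimed_cor1 (e / (Rabs c + 1))) as [N [HN HN0]].
  { apply Rdiv_lt_0_compat; [lra| pose proof (Rabs_pos c); lra]. }
  exists N.
  assert (HNp : 0 < INR N) by (apply lt_0_INR; lia).
  assert (H2 : 0 < 2 ^ N) by (apply pow_lt; lra).
  assert (c / 2 ^ N <= Rabs c / INR N).
  { unfold Rdiv. apply Rle_trans with (Rabs c * / 2 ^ N).
    apply Rmult_le_compat_r; [left; apply Rinv_0_lt_compat; lra| apply Rle_abs].
    apply Rmult_le_compat_l; [apply Rabs_pos|]. apply Rinv_le_contravar; auto. }
  assert (Rabs c / INR N < e).
  { assert (/ INR N * (Rabs c + 1) < e).
    { apply (Rmult_lt_reg_r (/ (Rabs c + 1))). apply Rinv_0_lt_compat; pose proof (Rabs_pos c); lra.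
      rewrite Rmult_assoc, Rinv_r. lra. pose proof (Rabs_pos c); lra. }
    unfold Rdiv. pose proof (Rabs_pos c).
    assert (0 < / INR N) by (apply Rinv_0_lt_compat; lra). nra. }
  lra.
Qed.

Lemma zero_geo (D c : R) : (forall k : nat, Rabs D <= c / 2 ^ k) -> D = 0.
Proof.
  intros H. destruct (Req_dec D 0) as [|Hn]; auto.
  assert (0 < Rabs D) by (apply Rabs_pos_lt; auto).
  destruct (small_geo c (Rabs D) H0) as [k Hk]. specialize (H k). lra.
Qed.

Lemma geo_lim (a : nat -> R) (B : R) :
  (forall k, Rabs (a (S k) - a k) <= B / 2 ^ k) ->
  is_lim_seq a (real (Lim_seq a)) /\ forall k, Rabs (a k - real (Lim_seq a)) <= 2 * B / 2 ^ k.
Proof.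
  intros H.
  assert (Htel : forall k j, Rabs (a (k + j)%nat - a k) <= 2 * B / 2 ^ k - 2 * B / 2 ^ (k + j)).
  { intros k j. induction j.
    - rewrite Nat.add_0_r. unfold Rminus. rewrite Rplus_opp_r, Rplus_opp_r, Rabs_R0. lra.
    - replace (k + S j)%nat with (S (k + j)) by lia.
      eapply Rle_trans. 
      replace (a (S (k + j)) - a k) with ((a (S (k + j)) - a (k + j)%nat) + (a (k + j)%nat - a k)) by ring.
      apply Rabs_triang.
      specialize (H (k + j)%nat).
      assert (E : 2 * B / 2 ^ S (k + j) = B / 2 ^ (k + j)).
      { simpl. field. apply pow_nonzero. lra. }
      rewrite E. lra. }
  assert (HB : 0 <= B).
  { specialize (H O). pose proof (Rabs_pos (a 1%nat - a 0%nat)). simpl in H. lra. }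
  assert (Hc : ex_finite_lim_seq a).
  { apply ex_lim_seq_cauchy_corr. intros [e He].
    destruct (small_geo (2 * B) (e/2)) as [N HN]. lra. exists N. intros n m Hn Hm.
    assert (Hgen : forall n, (N <= n)%nat -> Rabs (a n - a N) <= 2 * B / 2 ^ N).
    { intros n' Hn'. replace n' with (N + (n' - N))%nat by lia.
      eapply Rle_trans. apply Htel. assert (0 <= 2 * B / 2 ^ (N + (n' - N))).
      { apply Rdiv_le_0_compat. lra. apply pow_lt; lra. } lra. }
    simpl. pose proof (Hgen n Hn). pose proof (Hgen m Hm).
    replace (a n - a m) with ((a n - a N) - (a m - a N)) by ring.
    eapply Rle_lt_trans. apply Rabs_triang. rewrite Rabs_Ropp. lra. }
  pose proof (Lim_seq_correct' a Hc) as Hl. split; auto.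
  intros k.
  assert (Hl2 : is_lim_seq (fun j => Rabs (a (j + k)%nat - a k)) (Rabs (real (Lim_seq a) - a k))).
  { apply (is_lim_seq_abs _ (Finite (real (Lim_seq a) - a k))).
    apply (is_lim_seq_minus' _ _ (real (Lim_seq a)) (a k)).
    apply (is_lim_seq_incr_n a k). exact Hl. apply is_lim_seq_const. }
  assert (Hpt : forall j, Rabs (a (j + k)%nat - a k) <= 2 * B / 2 ^ k).
  { intros j. rewrite Nat.add_comm. eapply Rle_trans. apply Htel.
    assert (0 <= 2 * B / 2 ^ (k + j)). { apply Rdiv_le_0_compat. lra. apply pow_lt; lra. } lra. }
  assert (Hle := is_lim_seq_le (fun j => Rabs (a (j + k)%nat - a k)) (fun _ => 2 * B / 2 ^ k) _ _
     Hpt Hl2 (is_lim_seq_const _)).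
  simpl in Hle. rewrite Rabs_minus_sym. exact Hle.
Qed.

Lemma cplus (f g : R -> R) x : continuous f x -> continuous g x -> continuous (fun t => f t + g t) x.
Proof. intros; apply (continuous_plus f g); auto. Qed.
Lemma cminus (f g : R -> R) x : continuous f x -> continuous g x -> continuous (fun t => f t - g t) x.
Proof. intros; apply (continuous_minus f g); auto. Qed.
Lemma cmult (f g : R -> R) x : continuous f x -> continuous g x -> continuous (fun t => f t * g t) x.
Proof. intros; apply (continuous_mult f g); auto. Qed.
Lemma cabs (f : R -> R) x : continuous f x -> continuous (fun t => Rabs (f t)) x.
Proof. intros; apply continuous_Rabs_comp; auto. Qed.
Lemma cconst (c : R) x : continuous (fun _ : R => c) x.
Proof. apply continuous_const. Qed.
Lemma cid x : continuous (fun t : R => t) x.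
Proof. apply continuous_id. Qed.

Lemma RInt_exp (L C X : R) : 0 < L ->
  RInt (fun t => C * exp (2 * L * t)) 0 X = C * (exp (2 * L * X) - 1) / (2 * L).
Proof.
  intros HL.
  assert (H : is_RInt (fun t => C * exp (2 * L * t)) 0 X
     (minus ((fun t => C * exp (2 * L * t) / (2 * L)) X) ((fun t => C * exp (2 * L * t) / (2 * L)) 0))).
  { apply (is_RInt_derive (V:=R_CompleteNormedModule) (fun t => C * exp (2 * L * t) / (2 * L))).
  - intros x _. auto_derive; auto. field. lra.
  - intros x _. apply cmult. apply cconst.
    apply (continuous_comp (fun t => 2 * L * t) exp). apply cmult. apply cconst. apply cid.
    apply (ex_derive_continuous (K:=R_AbsRing) (V:=R_NormedModule)). auto_derive. auto. }
  rewrite (is_RInt_unique _ _ _ _ H).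
  unfold minus, plus, opp; simpl. rewrite Rmult_0_r, exp_0. field. lra.
Qed.


Section Picard.
Variables (F1 F2 F3 : R -> R -> R -> R) (L Sg y01 y02 y03 : R).
Hypothesis HL : 0 < L.
Hypothesis HSg : 0 < Sg.
Hypothesis Hlip : forall a1 a2 a3 b1 b2 b3,
  Rabs (F1 a1 a2 a3 - F1 b1 b2 b3) + Rabs (F2 a1 a2 a3 - F2 b1 b2 b3) + Rabs (F3 a1 a2 a3 - F3 b1 b2 b3)
  <= L * (Rabs (a1 - b1) + Rabs (a2 - b2) + Rabs (a3 - b3)).

Lemma lip1 : forall a1 a2 a3 b1 b2 b3, Rabs (F1 a1 a2 a3 - F1 b1 b2 b3) <= L * (Rabs (a1 - b1) + Rabs (a2 - b2) + Rabs (a3 - b3)).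
Proof. intros. pose proof (Hlip a1 a2 a3 b1 b2 b3). pose proof (Rabs_pos (F2 a1 a2 a3 - F2 b1 b2 b3)). pose proof (Rabs_pos (F3 a1 a2 a3 - F3 b1 b2 b3)). lra. Qed.
Lemma lip2 : forall a1 a2 a3 b1 b2 b3, Rabs (F2 a1 a2 a3 - F2 b1 b2 b3) <= L * (Rabs (a1 - b1) + Rabs (a2 - b2) + Rabs (a3 - b3)).
Proof. intros. pose proof (Hlip a1 a2 a3 b1 b2 b3). pose proof (Rabs_pos (F1 a1 a2 a3 - F1 b1 b2 b3)). pose proof (Rabs_pos (F3 a1 a2 a3 - F3 b1 b2 b3)). lra. Qed.
Lemma lip3 : forall a1 a2 a3 b1 b2 b3, Rabs (F3 a1 a2 a3 - F3 b1 b2 b3) <= L * (Rabs (a1 - b1) + Rabs (a2 - b2) + Rabs (a3 - b3)).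
Proof. intros. pose proof (Hlip a1 a2 a3 b1 b2 b3). pose proof (Rabs_pos (F2 a1 a2 a3 - F2 b1 b2 b3)). pose proof (Rabs_pos (F1 a1 a2 a3 - F1 b1 b2 b3)). lra. Qed.

Definition cl (x : R) := Rmin Sg (Rmax 0 x).

Lemma cl_bounds x : 0 <= cl x <= Sg.
Proof. unfold cl, Rmin, Rmax. repeat destruct Rle_dec; lra. Qed.
Lemma cl_id x : 0 <= x <= Sg -> cl x = x.
Proof. intros. unfold cl, Rmin, Rmax. repeat destruct Rle_dec; lra. Qed.
Lemma cl_lip x y : Rabs (cl x - cl y) <= Rabs (x - y).
Proof. unfold cl, Rmin, Rmax. repeat destruct Rle_dec; unfold Rabs; repeat destruct Rcase_abs; lra. Qed.
Lemma cl_cont x : continuous cl x.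
Proof. apply cont_eps. intros e He. exists e. split; auto. intros y Hy.
  eapply Rle_lt_trans. apply cl_lip. auto. Qed.

Lemma int_cont (g : R -> R) : (forall x, continuous g x) ->
  (forall x, continuous (fun x => RInt g 0 (cl x)) x) /\
  (forall x, 0 < x < Sg -> is_derive (fun x => RInt g 0 (cl x)) x (g x)).
Proof.
  intros Hg.
  assert (HD : forall z, is_derive (fun z => RInt g 0 z) z (g z)).
  { intros z. apply (is_derive_RInt g (fun z => RInt g 0 z) 0 z).
    exists (mkposreal 1 Rlt_0_1). intros b _. apply (RInt_correct (V:=R_CompleteNormedModule)). apply exR. auto.
    apply Hg. }
  split.
  - intros x. apply (continuous_comp cl (fun z => RInt g 0 z)). apply cl_cont.
    apply (ex_derive_continuous (K:=R_AbsRing) (V:=R_NormedModule) (fun z => RInt g 0 z)).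
    exists (g (cl x)). apply HD.
  - intros x Hx. apply (is_derive_ext_loc (fun z => RInt g 0 z)).
    assert (Hd : 0 < Rmin (x - 0) (Sg - x)) by (apply Rmin_pos; lra).
    exists (mkposreal _ Hd). intros y Hy. simpl in Hy. unfold ball in Hy; simpl in Hy. unfold AbsRing_ball in Hy. simpl in Hy.
    unfold abs, minus, plus, opp in Hy; simpl in Hy.
    rewrite cl_id. auto. pose proof (Rmin_l (x - 0) (Sg - x)). pose proof (Rmin_r (x - 0) (Sg - x)).
    unfold Rabs in Hy; destruct Rcase_abs in Hy; lra.
    apply HD.
Qed.

Definition F1' (s : R * R * R) := F1 (fst (fst s)) (snd (fst s)) (snd s).
Definition F2' (s : R * R * R) := F2 (fst (fst s)) (snd (fst s)) (snd s).
Definition F3' (s : R * R * R) := F3 (fst (fst s)) (snd (fst s)) (snd s).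

Fixpoint it (k : nat) : R -> R * R * R :=
  match k with
  | O => fun _ => (y01, y02, y03)
  | S k => fun x => (y01 + RInt (fun t => F1' (it k t)) 0 (cl x),
                     y02 + RInt (fun t => F2' (it k t)) 0 (cl x),
                     y03 + RInt (fun t => F3' (it k t)) 0 (cl x))
  end.

Definition c1 k x := fst (fst (it k x)).
Definition c2 k x := snd (fst (it k x)).
Definition c3 k x := snd (it k x).

Lemma it_cont k : forall x, continuous (c1 k) x /\ continuous (c2 k) x /\ continuous (c3 k) x.
Proof.
  induction k.
  - intros x. unfold c1, c2, c3. simpl. repeat split; apply continuous_const.
  - assert (Hg1 : forall x, continuous (fun t => F1' (it k t)) x).
    { intros x. destruct (IHk x) as [A [B C]]. apply (cont_lip3 F1 L (c1 k) (c2 k) (c3 k)); auto. lra. apply lip1. }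
    assert (Hg2 : forall x, continuous (fun t => F2' (it k t)) x).
    { intros x. destruct (IHk x) as [A [B C]]. apply (cont_lip3 F2 L (c1 k) (c2 k) (c3 k)); auto. lra. apply lip2. }
    assert (Hg3 : forall x, continuous (fun t => F3' (it k t)) x).
    { intros x. destruct (IHk x) as [A [B C]]. apply (cont_lip3 F3 L (c1 k) (c2 k) (c3 k)); auto. lra. apply lip3. }
    intros x. unfold c1, c2, c3; simpl. repeat split.
    + apply (continuous_plus (fun _ => y01)). apply continuous_const. apply (proj1 (int_cont _ Hg1)).
    + apply (continuous_plus (fun _ => y02)). apply continuous_const. apply (proj1 (int_cont _ Hg2)).
    + apply (continuous_plus (fun _ => y03)). apply continuous_const. apply (proj1 (int_cont _ Hg3)).
Qed.


Lemma g1_cont k x : continuous (fun t => F1' (it k t)) x.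
Proof. destruct (it_cont k x) as [A [B C]]. apply (cont_lip3 F1 L (c1 k) (c2 k) (c3 k)); auto. lra. apply lip1. Qed.
Lemma g2_cont k x : continuous (fun t => F2' (it k t)) x.
Proof. destruct (it_cont k x) as [A [B C]]. apply (cont_lip3 F2 L (c1 k) (c2 k) (c3 k)); auto. lra. apply lip2. Qed.
Lemma g3_cont k x : continuous (fun t => F3' (it k t)) x.
Proof. destruct (it_cont k x) as [A [B C]]. apply (cont_lip3 F3 L (c1 k) (c2 k) (c3 k)); auto. lra. apply lip3. Qed.

Lemma c1_S k x : c1 (S k) x = y01 + RInt (fun t => F1' (it k t)) 0 (cl x).
Proof. reflexivity. Qed.
Lemma c2_S k x : c2 (S k) x = y02 + RInt (fun t => F2' (it k t)) 0 (cl x).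
Proof. reflexivity. Qed.
Lemma c3_S k x : c3 (S k) x = y03 + RInt (fun t => F3' (it k t)) 0 (cl x).
Proof. reflexivity. Qed.

Definition Nd k x := Rabs (c1 (S k) x - c1 k x) + Rabs (c2 (S k) x - c2 k x) + Rabs (c3 (S k) x - c3 k x).
Definition A0 := (Rabs (F1 y01 y02 y03) + Rabs (F2 y01 y02 y03) + Rabs (F3 y01 y02 y03)) * Sg.

Lemma Nd_cont k x : continuous (Nd k) x.
Proof.
  unfold Nd. destruct (it_cont k x) as [A [B C]]. destruct (it_cont (S k) x) as [A' [B' C']].
  repeat apply cplus; apply cabs; apply cminus; auto.
Qed.

Lemma diff_int (g g' : R -> R) X : 0 <= X -> (forall x, continuous g x) -> (forall x, continuous g' x) ->
  Rabs ((RInt g' 0 X) - (RInt g 0 X)) <= RInt (fun t => Rabs (g' t - g t)) 0 X.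
Proof.
  intros HX Hg Hg'.
  assert (E : RInt g' 0 X - RInt g 0 X = RInt (fun t => g' t - g t) 0 X).
  { symmetry. apply (RInt_minus (V:=R_CompleteNormedModule)); apply exR; auto. }
  rewrite E. apply abs_RInt_le; auto. apply exR. intros; apply cminus; auto.
Qed.

Lemma Nd_bound k x : Nd k x <= A0 / 2 ^ k * exp (2 * L * cl x).
Proof.
  revert x. induction k; intros x.
  - unfold Nd, c1, c2, c3; simpl.
    rewrite !RInt_const. unfold scal; simpl. unfold mult; simpl.
    replace (y01 + (cl x - 0) * F1' (y01, y02, y03) - y01) with ((cl x) * F1 y01 y02 y03) by (unfold F1'; simpl; ring).
    replace (y02 + (cl x - 0) * F2' (y01, y02, y03) - y02) with ((cl x) * F2 y01 y02 y03) by (unfold F2'; simpl; ring).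
    replace (y03 + (cl x - 0) * F3' (y01, y02, y03) - y03) with ((cl x) * F3 y01 y02 y03) by (unfold F3'; simpl; ring).
    rewrite !Rabs_mult. pose proof (cl_bounds x). rewrite (Rabs_pos_eq (cl x)) by lra.
    assert (1 <= exp (2 * L * cl x)).
    { rewrite <- exp_0. destruct (Req_dec (cl x) 0) as [E|E]. rewrite E, Rmult_0_r. lra.
      left. apply exp_increasing. apply Rmult_lt_0_compat; lra. }
    unfold A0. simpl. rewrite Rdiv_1_r.
    pose proof (Rabs_pos (F1 y01 y02 y03)). pose proof (Rabs_pos (F2 y01 y02 y03)). pose proof (Rabs_pos (F3 y01 y02 y03)).
    set (Q := Rabs (F1 y01 y02 y03) + Rabs (F2 y01 y02 y03) + Rabs (F3 y01 y02 y03)).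
    assert (cl x * Rabs (F1 y01 y02 y03) + cl x * Rabs (F2 y01 y02 y03) + cl x * Rabs (F3 y01 y02 y03) = cl x * Q) by (unfold Q; ring).
    assert (0 <= Q) by (unfold Q; lra).
    assert (cl x * Q <= Sg * Q) by (apply Rmult_le_compat_r; lra).
    assert (0 <= Q * Sg) by (apply Rmult_le_pos; lra).
    assert (Q * Sg * 1 <= Q * Sg * exp (2 * L * cl x)) by (apply Rmult_le_compat_l; lra).
    lra.
  - pose proof (cl_bounds x) as HX.
    unfold Nd at 1. rewrite (c1_S (S k)), (c1_S k), (c2_S (S k)), (c2_S k), (c3_S (S k)), (c3_S k).
    set (X := cl x) in *. clearbody X.
    replace (y01 + RInt (fun t => F1' (it (S k) t)) 0 X - (y01 + RInt (fun t => F1' (it k t)) 0 X))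
      with (RInt (fun t => F1' (it (S k) t)) 0 X - RInt (fun t => F1' (it k t)) 0 X) by ring.
    replace (y02 + RInt (fun t => F2' (it (S k) t)) 0 X - (y02 + RInt (fun t => F2' (it k t)) 0 X))
      with (RInt (fun t => F2' (it (S k) t)) 0 X - RInt (fun t => F2' (it k t)) 0 X) by ring.
    replace (y03 + RInt (fun t => F3' (it (S k) t)) 0 X - (y03 + RInt (fun t => F3' (it k t)) 0 X))
      with (RInt (fun t => F3' (it (S k) t)) 0 X - RInt (fun t => F3' (it k t)) 0 X) by ring.
    eapply Rle_trans.
    { apply Rplus_le_compat. apply Rplus_le_compat.
      apply diff_int; [exact (proj1 HX)| apply g1_cont| apply g1_cont].
      apply diff_int; [exact (proj1 HX)| apply g2_cont| apply g2_cont].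
      apply diff_int; [exact (proj1 HX)| apply g3_cont| apply g3_cont]. }
    set (h1 := fun t => Rabs (F1' (it (S k) t) - F1' (it k t))).
    set (h2 := fun t => Rabs (F2' (it (S k) t) - F2' (it k t))).
    set (h3 := fun t => Rabs (F3' (it (S k) t) - F3' (it k t))).
    assert (Hc1 : forall t, continuous h1 t) by (intros; apply cabs; apply cminus; apply g1_cont).
    assert (Hc2 : forall t, continuous h2 t) by (intros; apply cabs; apply cminus; apply g2_cont).
    assert (Hc3 : forall t, continuous h3 t) by (intros; apply cabs; apply cminus; apply g3_cont).
    assert (E : RInt h1 0 X + RInt h2 0 X + RInt h3 0 X = RInt (fun t => h1 t + h2 t + h3 t) 0 X).
    { rewrite (RInt_plus (V:=R_CompleteNormedModule) (fun t => h1 t + h2 t) h3).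
      rewrite (RInt_plus (V:=R_CompleteNormedModule) h1 h2). reflexivity.
      apply exR; auto. apply exR; auto. apply exR; intros; apply cplus; auto. apply exR; auto. }
    rewrite E. clear E.
    eapply Rle_trans.
    { apply (RInt_le _ (fun t => (L * (A0 / 2 ^ k)) * exp (2 * L * t))). lra.
      apply exR; intros; repeat apply cplus; auto.
      apply exR; intros. apply cmult. apply cconst.
      apply (continuous_comp (fun t => 2 * L * t) exp). apply cmult. apply cconst. apply cid.
      apply (ex_derive_continuous (K:=R_AbsRing) (V:=R_NormedModule)). auto_derive. auto.
      intros t Ht. unfold h1, h2, h3.
      eapply Rle_trans. unfold F1', F2', F3'. apply Hlip.
      rewrite Rmult_assoc. apply Rmult_le_compat_l. lra.
      pose proof (IHk t) as IH. unfold Nd, c1, c2, c3 in IH. rewrite (cl_id t) in IH by lra. exact IH. }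
    rewrite RInt_exp by lra.
    assert (0 <= A0).
    { unfold A0. apply Rmult_le_pos; [|lra]. pose proof (Rabs_pos (F1 y01 y02 y03)). pose proof (Rabs_pos (F2 y01 y02 y03)). pose proof (Rabs_pos (F3 y01 y02 y03)). lra. }
    assert (H2k : 0 < 2 ^ k) by (apply pow_lt; lra).
    replace (L * (A0 / 2 ^ k) * (exp (2 * L * X) - 1) / (2 * L)) with (A0 / 2 ^ S k * (exp (2 * L * X) - 1)).
    2:{ simpl. field. split; lra. }
    assert (0 <= A0 / 2 ^ S k) by (apply Rdiv_le_0_compat; auto; apply pow_lt; lra).
    assert (A0 / 2 ^ S k * (exp (2 * L * X) - 1) <= A0 / 2 ^ S k * exp (2 * L * X)) by (apply Rmult_le_compat_l; lra).
    lra.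
Qed.


Definition B0 := A0 * exp (2 * L * Sg).

Lemma A0_pos : 0 <= A0.
Proof. unfold A0. apply Rmult_le_pos; [|lra]. pose proof (Rabs_pos (F1 y01 y02 y03)). pose proof (Rabs_pos (F2 y01 y02 y03)). pose proof (Rabs_pos (F3 y01 y02 y03)). lra. Qed.

Lemma Nd_unif k x : Nd k x <= B0 / 2 ^ k.
Proof.
  eapply Rle_trans. apply Nd_bound. unfold B0.
  pose proof (cl_bounds x). pose proof A0_pos.
  assert (exp (2 * L * cl x) <= exp (2 * L * Sg)).
  { destruct (Req_dec (cl x) Sg) as [E|E]. rewrite E; lra. left. apply exp_increasing. apply Rmult_lt_compat_l; lra. }
  assert (0 < 2 ^ k) by (apply pow_lt; lra).
  replace (A0 * exp (2 * L * Sg) / 2 ^ k) with (A0 / 2 ^ k * exp (2 * L * Sg)) by (field; lra).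
  apply Rmult_le_compat_l; auto. apply Rdiv_le_0_compat; auto.
Qed.

Definition Y1 x := real (Lim_seq (fun k => c1 k x)).
Definition Y2 x := real (Lim_seq (fun k => c2 k x)).
Definition Y3 x := real (Lim_seq (fun k => c3 k x)).

Lemma Y_approx k x : Rabs (c1 k x - Y1 x) <= 2 * B0 / 2 ^ k /\ Rabs (c2 k x - Y2 x) <= 2 * B0 / 2 ^ k /\ Rabs (c3 k x - Y3 x) <= 2 * B0 / 2 ^ k.
Proof.
  assert (H := fun k => Nd_unif k x). unfold Nd in H.
  assert (K1 : forall k, Rabs (c1 (S k) x - c1 k x) <= B0 / 2 ^ k).
  { intros k0. pose proof (H k0). pose proof (Rabs_pos (c2 (S k0) x - c2 k0 x)). pose proof (Rabs_pos (c3 (S k0) x - c3 k0 x)). lra. }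
  assert (K2 : forall k, Rabs (c2 (S k) x - c2 k x) <= B0 / 2 ^ k).
  { intros k0. pose proof (H k0). pose proof (Rabs_pos (c1 (S k0) x - c1 k0 x)). pose proof (Rabs_pos (c3 (S k0) x - c3 k0 x)). lra. }
  assert (K3 : forall k, Rabs (c3 (S k) x - c3 k x) <= B0 / 2 ^ k).
  { intros k0. pose proof (H k0). pose proof (Rabs_pos (c2 (S k0) x - c2 k0 x)). pose proof (Rabs_pos (c1 (S k0) x - c1 k0 x)). lra. }
  repeat split.
  - apply (proj2 (geo_lim (fun k => c1 k x) B0 K1)).
  - apply (proj2 (geo_lim (fun k => c2 k x) B0 K2)).
  - apply (proj2 (geo_lim (fun k => c3 k x) B0 K3)).
Qed.

Lemma unif_cont (c : nat -> R -> R) (Y : R -> R) x :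
  (forall k, continuous (c k) x) -> (forall k z, Rabs (c k z - Y z) <= 2 * B0 / 2 ^ k) ->
  continuous Y x.
Proof.
  intros Hc Ha. apply cont_eps. intros e He.
  destruct (small_geo (4 * B0) (e/2)) as [k Hk]. lra.
  destruct (eps_cont _ _ (Hc k) (e/2)) as [d [Hd Hy]]. lra.
  exists d. split; auto. intros y Hyx. specialize (Hy y Hyx).
  pose proof (Ha k y). pose proof (Ha k x).
  replace (Y y - Y x) with ((c k y - c k x) - (c k y - Y y) + (c k x - Y x)) by ring.
  eapply Rle_lt_trans. apply Rabs_triang. eapply Rle_lt_trans. apply Rplus_le_compat_r. 
  eapply Rle_trans. apply Rabs_triang. rewrite Rabs_Ropp. apply Rle_refl.
  assert (4 * B0 / 2 ^ k = 2 * B0 / 2 ^ k + 2 * B0 / 2 ^ k) by (field; apply pow_nonzero; lra).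
  lra.
Qed.

Lemma Y_cont x : continuous Y1 x /\ continuous Y2 x /\ continuous Y3 x.
Proof.
  repeat split.
  apply (unif_cont c1). intros k; apply (it_cont k x). intros k z; apply (Y_approx k z).
  apply (unif_cont c2). intros k; apply (it_cont k x). intros k z; apply (Y_approx k z).
  apply (unif_cont c3). intros k; apply (it_cont k x). intros k z; apply (Y_approx k z).
Qed.

Lemma int_eq_gen (G : R -> R -> R -> R) (cS : nat -> R -> R) (y0 Y : R -> R) x0 :
  (forall a1 a2 a3 b1 b2 b3, Rabs (G a1 a2 a3 - G b1 b2 b3) <= L * (Rabs (a1 - b1) + Rabs (a2 - b2) + Rabs (a3 - b3))) ->
  (forall k x, cS k x = y0 x + RInt (fun t => G (c1 k t) (c2 k t) (c3 k t)) 0 (cl x)) ->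
  (forall k x, Rabs (cS k x - Y x) <= 2 * B0 / 2 ^ S k) ->
  Y x0 = y0 x0 + RInt (fun t => G (Y1 t) (Y2 t) (Y3 t)) 0 (cl x0).
Proof.
  intros HG HcS HY.
  assert (HGc : forall t, continuous (fun t => G (Y1 t) (Y2 t) (Y3 t)) t).
  { intros t. destruct (Y_cont t) as [A [B C]]. apply (cont_lip3 G L); auto. lra. }
  assert (HGk : forall k t, continuous (fun t => G (c1 k t) (c2 k t) (c3 k t)) t).
  { intros k t. destruct (it_cont k t) as [A [B C]]. apply (cont_lip3 G L); auto. lra. }
  apply Rminus_diag_uniq.
  apply (zero_geo _ (B0 + Sg * L * 6 * B0)). intros k.
  pose proof (cl_bounds x0) as Hx.
  assert (H1 : Rabs (RInt (fun t => G (c1 k t) (c2 k t) (c3 k t)) 0 (cl x0) - RInt (fun t => G (Y1 t) (Y2 t) (Y3 t)) 0 (cl x0))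
     <= (cl x0 - 0) * (L * (6 * B0 / 2 ^ k))).
  { rewrite <- (RInt_minus (V:=R_CompleteNormedModule)); try (apply exR; auto).
    apply abs_RInt_le_const. lra. apply exR. intros; apply cminus; auto.
    intros t Ht. eapply Rle_trans. apply HG. apply Rmult_le_compat_l. lra.
    destruct (Y_approx k t) as [A [B C]].
    replace (6 * B0 / 2 ^ k) with (2 * B0 / 2 ^ k + 2 * B0 / 2 ^ k + 2 * B0 / 2 ^ k) by (field; apply pow_nonzero; lra).
    lra. }
  specialize (HY k x0). rewrite HcS in HY.
  replace (Y x0 - (y0 x0 + RInt (fun t => G (Y1 t) (Y2 t) (Y3 t)) 0 (cl x0))) with
    ((RInt (fun t => G (c1 k t) (c2 k t) (c3 k t)) 0 (cl x0) - RInt (fun t => G (Y1 t) (Y2 t) (Y3 t)) 0 (cl x0))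
     - (y0 x0 + RInt (fun t => G (c1 k t) (c2 k t) (c3 k t)) 0 (cl x0) - Y x0)) by ring.
  eapply Rle_trans. apply Rabs_triang. rewrite Rabs_Ropp.
  assert (E : 2 * B0 / 2 ^ S k = B0 / 2 ^ k) by (simpl; field; apply pow_nonzero; lra).
  rewrite E in HY.
  assert ((cl x0 - 0) * (L * (6 * B0 / 2 ^ k)) <= Sg * L * 6 * B0 / 2 ^ k).
  { assert (0 <= L * (6 * B0 / 2 ^ k)).
    { apply Rmult_le_pos. lra. apply Rdiv_le_0_compat. unfold B0. pose proof A0_pos. pose proof (exp_pos (2 * L * Sg)). nra. apply pow_lt; lra. }
    replace (Sg * L * 6 * B0 / 2 ^ k) with (Sg * (L * (6 * B0 / 2 ^ k))) by (field; apply pow_nonzero; lra).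
    apply Rmult_le_compat_r; lra. }
  replace ((B0 + Sg * L * 6 * B0) / 2 ^ k) with (B0 / 2 ^ k + Sg * L * 6 * B0 / 2 ^ k) by (field; apply pow_nonzero; lra).
  lra.
Qed.

Theorem picard_main :
  (forall x, continuous Y1 x /\ continuous Y2 x /\ continuous Y3 x) /\
  Y1 0 = y01 /\ Y2 0 = y02 /\ Y3 0 = y03 /\
  (forall x, 0 < x < Sg ->
     is_derive Y1 x (F1 (Y1 x) (Y2 x) (Y3 x)) /\
     is_derive Y2 x (F2 (Y1 x) (Y2 x) (Y3 x)) /\
     is_derive Y3 x (F3 (Y1 x) (Y2 x) (Y3 x))).
Proof.
  assert (E1 : forall x, Y1 x = y01 + RInt (fun t => F1 (Y1 t) (Y2 t) (Y3 t)) 0 (cl x)).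
  { intros x. apply (int_eq_gen F1 (fun k => c1 (S k)) (fun _ => y01)). apply lip1.
    intros; reflexivity. intros k z; apply (Y_approx (S k) z). }
  assert (E2 : forall x, Y2 x = y02 + RInt (fun t => F2 (Y1 t) (Y2 t) (Y3 t)) 0 (cl x)).
  { intros x. apply (int_eq_gen F2 (fun k => c2 (S k)) (fun _ => y02)). apply lip2.
    intros; reflexivity. intros k z; apply (Y_approx (S k) z). }
  assert (E3 : forall x, Y3 x = y03 + RInt (fun t => F3 (Y1 t) (Y2 t) (Y3 t)) 0 (cl x)).
  { intros x. apply (int_eq_gen F3 (fun k => c3 (S k)) (fun _ => y03)). apply lip3.
    intros; reflexivity. intros k z; apply (Y_approx (S k) z). }
  assert (Hcl0 : cl 0 = 0) by (apply cl_id; lra).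
  assert (HG : forall (G : R -> R -> R -> R), (forall a1 a2 a3 b1 b2 b3, Rabs (G a1 a2 a3 - G b1 b2 b3) <= L * (Rabs (a1 - b1) + Rabs (a2 - b2) + Rabs (a3 - b3))) ->
     forall t, continuous (fun t => G (Y1 t) (Y2 t) (Y3 t)) t).
  { intros G HG t. destruct (Y_cont t) as [A [B C]]. apply (cont_lip3 G L); auto. lra. }
  assert (HD : forall (G : R -> R -> R -> R) (Y : R -> R) y0,
     (forall a1 a2 a3 b1 b2 b3, Rabs (G a1 a2 a3 - G b1 b2 b3) <= L * (Rabs (a1 - b1) + Rabs (a2 - b2) + Rabs (a3 - b3))) ->
     (forall x, Y x = y0 + RInt (fun t => G (Y1 t) (Y2 t) (Y3 t)) 0 (cl x)) ->
     forall x, 0 < x < Sg -> is_derive Y x (G (Y1 x) (Y2 x) (Y3 x))).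
  { intros G Y y0 HGl HE x Hx.
    apply (is_derive_ext (fun x => y0 + RInt (fun t => G (Y1 t) (Y2 t) (Y3 t)) 0 (cl x))).
    intros; rewrite HE; reflexivity.
    replace (G (Y1 x) (Y2 x) (Y3 x)) with (plus zero (G (Y1 x) (Y2 x) (Y3 x))) by (unfold plus, zero; simpl; ring).
    apply (is_derive_plus (fun _ => y0)). apply (is_derive_const (K:=R_AbsRing) (V:=R_NormedModule)).
    apply (proj2 (int_cont _ (HG G HGl))). auto. }
  split; [apply Y_cont|].
  split. rewrite E1, Hcl0, RInt_point. unfold zero; simpl; ring.
  split. rewrite E2, Hcl0, RInt_point. unfold zero; simpl; ring.
  split. rewrite E3, Hcl0, RInt_point. unfold zero; simpl; ring.
  intros x Hx. split; [|split].
  apply (HD F1 Y1 y01 lip1 E1 x Hx).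
  apply (HD F2 Y2 y02 lip2 E2 x Hx).
  apply (HD F3 Y3 y03 lip3 E3 x Hx).
Qed.

End Picard.

Theorem picard (F1 F2 F3 : R -> R -> R -> R) (L Sg y01 y02 y03 : R) :
  0 < L -> 0 < Sg ->
  (forall a1 a2 a3 b1 b2 b3,
     Rabs (F1 a1 a2 a3 - F1 b1 b2 b3) + Rabs (F2 a1 a2 a3 - F2 b1 b2 b3) + Rabs (F3 a1 a2 a3 - F3 b1 b2 b3)
     <= L * (Rabs (a1 - b1) + Rabs (a2 - b2) + Rabs (a3 - b3))) ->
  exists Y1 Y2 Y3 : R -> R,
  (forall x, continuous Y1 x /\ continuous Y2 x /\ continuous Y3 x) /\
  Y1 0 = y01 /\ Y2 0 = y02 /\ Y3 0 = y03 /\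
  (forall x, 0 < x < Sg ->
     is_derive Y1 x (F1 (Y1 x) (Y2 x) (Y3 x)) /\
     is_derive Y2 x (F2 (Y1 x) (Y2 x) (Y3 x)) /\
     is_derive Y3 x (F3 (Y1 x) (Y2 x) (Y3 x))).
Proof.
  intros HL HS Hl. eexists; eexists; eexists. apply (picard_main F1 F2 F3 L Sg y01 y02 y03 HL HS Hl).
Qed.



Definition pw (e x : R) : R := if Rlt_dec 0 x then Rpower x e else 0.

Lemma pw_pos e x : 0 < x -> pw e x = Rpower x e.
Proof. intros H. unfold pw. destruct Rlt_dec; [auto|lra]. Qed.
Lemma pw_npos e x : x <= 0 -> pw e x = 0.
Proof. intros H. unfold pw. destruct Rlt_dec; [lra|auto]. Qed.
Lemma pw_ge0 e x : 0 <= pw e x.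
Proof. unfold pw. destruct Rlt_dec. left; apply exp_pos. lra. Qed.
Lemma pw_gt0 e x : 0 < x -> 0 < pw e x.
Proof. intros; rewrite pw_pos; auto. apply exp_pos. Qed.

Lemma pw_mono e a b : 0 <= e -> a <= b -> pw e a <= pw e b.
Proof.
  intros He Hab. destruct (Rle_lt_dec a 0).
  rewrite (pw_npos e a); auto. apply pw_ge0.
  rewrite !pw_pos by lra. apply Rle_Rpower_l; lra.
Qed.
Lemma pw_smono e a b : 0 < e -> 0 <= a -> a < b -> pw e a < pw e b.
Proof.
  intros He Ha Hab. destruct (Req_dec a 0). subst. rewrite pw_npos by lra. apply pw_gt0; lra.
  rewrite !pw_pos by lra. apply Rlt_Rpower_l; lra.
Qed.

Lemma pw_derive e x : 0 < x -> is_derive (pw e) x (e * Rpower x (e - 1)).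
Proof.
  intros Hx. apply (is_derive_ext_loc (fun y => Rpower y e)).
  assert (Hd : 0 < x) by lra. exists (mkposreal x Hd). intros y Hy.
  unfold ball in Hy; simpl in Hy. unfold AbsRing_ball, abs, minus, plus, opp in Hy; simpl in Hy.
  rewrite pw_pos; auto. unfold Rabs in Hy; destruct Rcase_abs in Hy; lra.
  apply is_derive_Reals. apply derivable_pt_lim_power; auto.
Qed.

Lemma pw_cont e x : 0 < e -> continuous (pw e) x.
Proof.
  intros He. destruct (Rlt_le_dec 0 x) as [Hx|Hx].
  - apply (ex_derive_continuous (K:=R_AbsRing) (V:=R_NormedModule)). eexists. apply pw_derive; auto.
  - apply cont_eps. intros eps Heps.
    exists (Rpower eps (/ e)). split. apply exp_pos.
    intros y Hy. rewrite (pw_npos e x Hx). rewrite Rminus_0_r, Rabs_pos_eq by apply pw_ge0.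
    destruct (Rle_lt_dec y 0). rewrite pw_npos; auto.
    rewrite pw_pos; auto.
    assert (y < Rpower eps (/ e)).
    { unfold Rabs in Hy; destruct Rcase_abs in Hy; lra. }
    apply Rlt_le_trans with (Rpower (Rpower eps (/ e)) e).
    apply Rlt_Rpower_l; lra.
    rewrite Rpower_mult. rewrite Rinv_l by lra. rewrite Rpower_1; lra.
Qed.

Lemma pw_mult e1 e2 x : 0 <= x -> pw (e1 + e2) x = pw e1 x * pw e2 x.
Proof.
  intros Hx. destruct (Req_dec x 0). subst; rewrite !pw_npos; lra.
  rewrite !pw_pos by lra. apply Rpower_plus.
Qed.
Lemma pw_one x : 0 <= x -> pw 1 x = x.
Proof. intros Hx. destruct (Req_dec x 0). subst; rewrite pw_npos; lra. rewrite pw_pos by lra. apply Rpower_1; lra. Qed.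

Lemma pw_le_R e a R : 0 <= e -> 0 <= a <= R -> pw e a <= pw e R.
Proof. intros; apply pw_mono; lra. Qed.

Lemma pw_lip e R a b : 1 <= e -> 0 < R -> 0 <= a <= R -> 0 <= b <= R ->
  Rabs (pw e a - pw e b) <= e * pw (e - 1) R * Rabs (a - b).
Proof.
  intros He HR Ha Hb.
  assert (Hw : forall a b, 0 <= a <= R -> 0 <= b <= R -> a <= b -> Rabs (pw e a - pw e b) <= e * pw (e - 1) R * Rabs (a - b)).
  { clear a b Ha Hb. intros a b Ha Hb Hab.
    rewrite Rabs_minus_sym, Rabs_pos_eq. 2:{ pose proof (pw_mono e a b ltac:(lra) Hab). lra. }
    rewrite (Rabs_minus_sym a b), Rabs_pos_eq by lra.
    assert (HR1 : 0 <= pw (e - 1) R) by apply pw_ge0.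
    destruct (Req_dec a 0) as [Ha0|Ha0].
    - subst a. rewrite (pw_npos e 0) by lra. rewrite Rminus_0_r.
      replace e with ((e - 1) + 1) at 1 by ring. rewrite pw_mult, pw_one by lra.
      assert (pw (e - 1) b <= pw (e - 1) R) by (apply pw_mono; lra).
      assert (pw (e - 1) b * b <= pw (e - 1) R * b) by (apply Rmult_le_compat_r; lra).
      assert (pw (e - 1) R * b <= e * pw (e - 1) R * b).
      { rewrite <- (Rmult_1_l (pw (e - 1) R * b)) at 1. rewrite Rmult_assoc. apply Rmult_le_compat_r; [|lra]. apply Rmult_le_pos; lra. }
      lra.
    - destruct (Req_dec a b) as [Eab|Eab]. subst. rewrite !Rminus_eq_0. rewrite Rmult_0_r. lra.
      destruct (MVT_gen (pw e) a b (fun x => e * Rpower x (e - 1))) as [c [Hc Hmvt]].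
      + intros x Hx. rewrite Rmin_left, Rmax_right in Hx by lra. apply pw_derive; lra.
      + intros x Hx. apply continuity_pt_filterlim. apply pw_cont; lra.
      + rewrite Rmin_left, Rmax_right in Hc by lra. rewrite Hmvt.
        apply Rmult_le_compat_r; [lra|]. apply Rmult_le_compat_l; [lra|].
        rewrite <- (pw_pos (e - 1) c) by lra. apply pw_mono; lra. }
  destruct (Rle_lt_dec a b). apply Hw; auto.
  rewrite Rabs_minus_sym, (Rabs_minus_sym a b). apply Hw; auto; lra.
Qed.

Lemma mono_inner (f df : R -> R) a b : a < b ->
  (forall x, a < x < b -> is_derive f x (df x)) ->
  (forall x, a < x < b -> df x <= 0) ->
  forall a' b', a < a' -> a' <= b' -> b' < b -> f b' <= f a'.
Proof.
  intros Hab Hd Hs a' b' H1 H2 H3. destruct (Req_dec a' b'). subst; lra.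
  destruct (MVT_gen f a' b' df) as [c [Hc' Hm]].
  intros x Hx; rewrite Rmin_left, Rmax_right in Hx by lra; apply Hd; lra.
  intros x Hx; rewrite Rmin_left, Rmax_right in Hx by lra; apply continuity_pt_filterlim.
  apply (ex_derive_continuous (K:=R_AbsRing) (V:=R_NormedModule)). eexists; apply Hd; lra.
  rewrite Rmin_left, Rmax_right in Hc' by lra.
  assert (df c <= 0) by (apply Hs; lra). nra.
Qed.

Lemma mono_nonincr (f df : R -> R) a b : a <= b ->
  (forall x, a < x < b -> is_derive f x (df x)) ->
  (forall x, a <= x <= b -> continuous f x) ->
  (forall x, a < x < b -> df x <= 0) -> f b <= f a.
Proof.
  intros Hab Hd Hc Hs. destruct (Req_dec a b). subst; lra.
  apply Rnot_lt_le. intros Hlt.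
  set (e := (f b - f a) / 3).
  assert (He : 0 < e) by (unfold e; lra).
  destruct (eps_cont f a (Hc a ltac:(lra)) e He) as [d1 [Hd1 Ha]].
  destruct (eps_cont f b (Hc b ltac:(lra)) e He) as [d2 [Hd2 Hb]].
  set (h := Rmin (Rmin d1 d2) ((b - a) / 3) / 2).
  assert (Hh : 0 < h) by (unfold h; apply Rdiv_lt_0_compat; [apply Rmin_pos; [apply Rmin_pos|]|]; lra).
  assert (Hh1 : h < d1) by (unfold h; pose proof (Rmin_l (Rmin d1 d2) ((b-a)/3)); pose proof (Rmin_l d1 d2); lra).
  assert (Hh2 : h < d2) by (unfold h; pose proof (Rmin_l (Rmin d1 d2) ((b-a)/3)); pose proof (Rmin_r d1 d2); lra).
  assert (Hh3 : h < (b - a) / 3) by (unfold h; pose proof (Rmin_r (Rmin d1 d2) ((b-a)/3)); pose proof (Rmin_l d1 d2); lra).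
  assert (X1 := Ha (a + h) ltac:(rewrite Rabs_pos_eq; lra)).
  assert (X2 := Hb (b - h) ltac:(rewrite Rabs_minus_sym, Rabs_pos_eq; lra)).
  assert (X3 := mono_inner f df a b ltac:(lra) Hd Hs (a + h) (b - h) ltac:(lra) ltac:(lra) ltac:(lra)).
  unfold Rabs in X1, X2; destruct Rcase_abs in X1; destruct Rcase_abs in X2; unfold e in *; lra.
Qed.

Lemma deriv_le (f df : R -> R) a b M : a <= b ->
  (forall x, a < x < b -> is_derive f x (df x)) ->
  (forall x, a <= x <= b -> continuous f x) ->
  (forall x, a < x < b -> df x <= M) -> f b - f a <= M * (b - a).
Proof.
  intros Hab Hd Hc Hs.
  assert (H := mono_nonincr (fun x => f x - M * x) (fun x => df x - M) a b Hab).
  cut (f b - M * b <= f a - M * a). lra.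
  apply H.
  - intros x Hx. assert (HM : is_derive (fun x => M * x) x M) by (auto_derive; auto; ring).
    apply (is_derive_minus f (fun x => M * x)); auto.
  - intros x Hx. apply cminus. auto. apply cmult. apply cconst. apply cid.
  - intros x Hx. specialize (Hs x Hx). lra.
Qed.

Lemma deriv_ge (f df : R -> R) a b M : a <= b ->
  (forall x, a < x < b -> is_derive f x (df x)) ->
  (forall x, a <= x <= b -> continuous f x) ->
  (forall x, a < x < b -> M <= df x) -> M * (b - a) <= f b - f a.
Proof.
  intros Hab Hd Hc Hs.
  assert (H := deriv_le (fun x => - f x) (fun x => - df x) a b (- M) Hab).
  cut (- f b - - f a <= - M * (b - a)). lra.
  apply H.
  - intros x Hx. apply (is_derive_opp f). auto.
  - intros x Hx. apply (continuous_opp f). auto.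
  - intros x Hx. specialize (Hs x Hx). lra.
Qed.

Lemma first_zero (f : R -> R) a b : a <= b -> (forall x, continuous f x) -> 0 < f a -> f b <= 0 ->
  exists c, a < c <= b /\ f c = 0 /\ forall x, a <= x < c -> 0 < f x.
Proof.
  intros Hab Hc Ha Hb.
  set (E := fun x => a <= x <= b /\ forall y, a <= y <= x -> 0 < f y).
  assert (HE1 : bound E). { exists b. intros x [Hx _]. lra. }
  assert (HE2 : exists x, E x). { exists a. split. lra. intros y Hy. replace y with a by lra. auto. }
  destruct (completeness E HE1 HE2) as [c [Hub Hlub]].
  assert (Hca : a <= c). { apply Hub. destruct HE2 as [x Hx]. unfold E. split. lra. intros y Hy. replace y with a by lra; auto. }
  assert (Hcb : c <= b). { apply Hlub. intros x [Hx _]. lra. }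
  assert (Hbelow : forall x, a <= x < c -> 0 < f x).
  { intros x Hx. destruct (Classical_Prop.classic (exists e, E e /\ x < e)) as [[e [[He1 He2] He3]]|Hn].
    apply He2; lra.
    assert (Hux : is_upper_bound E x).
    { intros e He. apply Rnot_lt_le. intros Hlt. apply Hn. exists e; auto. }
    specialize (Hlub x Hux). lra. }
  assert (Hfc1 : f c <= 0).
  { apply Rnot_lt_le. intros Hpos.
    destruct (Req_dec c b). subst c. lra.
    destruct (eps_cont f c (Hc c) (f c) Hpos) as [d [Hd Hy]].
    set (c' := Rmin (c + d / 2) b).
    assert (HEc : E c').
    { unfold E, c'. split. split. pose proof (Rmin_r (c + d/2) b). unfold Rmin; destruct Rle_dec; lra. apply Rmin_r.
      intros y Hy'. destruct (Rlt_le_dec y c). apply Hbelow; lra.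
      assert (Hyc : Rabs (y - c) < d). { pose proof (Rmin_l (c + d/2) b). rewrite Rabs_pos_eq; lra. }
      specialize (Hy y Hyc). unfold Rabs in Hy. destruct Rcase_abs in Hy; lra. }
    specialize (Hub c' HEc). unfold c' in Hub. unfold Rmin in Hub; destruct Rle_dec in Hub; lra. }
  assert (Hfc2 : 0 <= f c).
  { apply Rnot_lt_le. intros Hneg.
    destruct (Req_dec c a). subst c. lra.
    destruct (eps_cont f c (Hc c) (- f c)) as [d [Hd Hy]]. lra.
    set (x := Rmax a (c - d / 2)).
    assert (Hx : a <= x < c). { unfold x, Rmax; destruct Rle_dec; lra. }
    assert (Hxc : Rabs (x - c) < d). { rewrite Rabs_minus_sym, Rabs_pos_eq; unfold x, Rmax in *; destruct Rle_dec; lra. }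
    specialize (Hy x Hxc). specialize (Hbelow x Hx). unfold Rabs in Hy; destruct Rcase_abs in Hy; lra. }
  exists c. split. split; auto. destruct (Req_dec c a). subst c. lra. lra.
  split. lra. auto.
Qed.

Lemma lim_right_eps (f : R -> R) x l :
  (forall e, 0 < e -> exists d, 0 < d /\ forall t, x < t < x + d -> Rabs (f t - l) < e) ->
  filterlim f (at_right x) (locally l).
Proof.
  intros H. apply filterlim_locally. intros [e He].
  destruct (H e He) as [d [Hd Hy]].
  exists (mkposreal d Hd). intros y Hb Hxy. apply Hy.
  unfold ball in Hb; simpl in Hb. unfold AbsRing_ball, abs, minus, plus, opp in Hb; simpl in Hb.
  unfold Rabs in Hb; destruct Rcase_abs in Hb; lra.
Qed.

Lemma lim_left_eps (f : R -> R) x l :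
  (forall e, 0 < e -> exists d, 0 < d /\ forall t, x - d < t < x -> Rabs (f t - l) < e) ->
  filterlim f (at_left x) (locally l).
Proof.
  intros H. apply filterlim_locally. intros [e He].
  destruct (H e He) as [d [Hd Hy]].
  exists (mkposreal d Hd). intros y Hb Hxy. apply Hy.
  unfold ball in Hb; simpl in Hb. unfold AbsRing_ball, abs, minus, plus, opp in Hb; simpl in Hb.
  unfold Rabs in Hb; destruct Rcase_abs in Hb; lra.
Qed.

Lemma filterlim_right_ext (f g : R -> R) x l : (forall t, x < t -> f t = g t) ->
  filterlim f (at_right x) (locally l) -> filterlim g (at_right x) (locally l).
Proof.
  intros H. apply filterlim_ext_loc. exists (mkposreal 1 Rlt_0_1). intros y _ Hy. apply H; auto.
Qed.
Lemma filterlim_left_ext (f g : R -> R) x l : (forall t, t < x -> f t = g t) ->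
  filterlim f (at_left x) (locally l) -> filterlim g (at_left x) (locally l).
Proof.
  intros H. apply filterlim_ext_loc. exists (mkposreal 1 Rlt_0_1). intros y _ Hy. apply H; auto.
Qed.

Lemma no_up_cross (f df : R -> R) a c : a < c ->
  (forall x, a < x <= c -> is_derive f x (df x)) -> continuous df c ->
  f c = 0 -> (forall x, a <= x < c -> f x < 0) -> df c < 0 -> False.
Proof.
  intros Hac Hd Hdc Hf Hneg Hdf.
  destruct (eps_cont df c Hdc (- df c)) as [d [Hdp Hy]]. lra.
  set (h := Rmin (d / 2) ((c - a) / 2)).
  assert (Hh : 0 < h) by (unfold h; apply Rmin_pos; lra).
  assert (Hh1 : h <= d / 2) by apply Rmin_l. assert (Hh2 : h <= (c - a) / 2) by apply Rmin_r.
  assert (X := deriv_le f df (c - h) c 0 ltac:(lra)).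
  assert (f c - f (c - h) <= 0 * (c - (c - h))).
  { apply X.
    - intros x Hx. apply Hd. lra.
    - intros x Hx. apply (ex_derive_continuous (K:=R_AbsRing) (V:=R_NormedModule)). eexists; apply Hd; lra.
    - intros x Hx. assert (Hxc : Rabs (x - c) < d) by (rewrite Rabs_minus_sym, Rabs_pos_eq; lra).
      specialize (Hy x Hxc). unfold Rabs in Hy; destruct Rcase_abs in Hy; lra. }
  specialize (Hneg (c - h) ltac:(lra)). lra.
Qed.

Lemma inv_deriv (f g df : R -> R) lb ub x :
  lb < ub -> lb < x < ub ->
  (forall a, g lb <= a <= g ub -> derivable_pt_lim f a (df a)) ->
  continuity_pt g x -> g lb <= g x <= g ub ->
  (forall y, lb <= y <= ub -> f (g y) = y) -> df (g x) <> 0 ->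
  derivable_pt_lim g x (1 / df (g x)).
Proof.
  intros Hlu Hx Hd Hc Hgx Hfg Hne.
  pose (Prf := fun a (H : g lb <= a <= g ub) => exist (fun l => derivable_pt_lim f a l) (df a) (Hd a H)).
  apply (derivable_pt_lim_recip_interv f g lb ub x Prf Hc Hlu Hx Hgx).
  intros y Hy. unfold comp, id. auto.
  simpl. auto.
Qed.

Lemma dmult (f g : R -> R) x df dg : is_derive f x df -> is_derive g x dg -> is_derive (fun t => f t * g t) x (df * g x + f x * dg).
Proof. intros. apply (is_derive_mult f g x df dg); auto. intros; apply Rmult_comm. Qed.
Lemma dplus (f g : R -> R) x df dg : is_derive f x df -> is_derive g x dg -> is_derive (fun t => f t + g t) x (df + dg).
Proof. intros. apply (is_derive_plus f g x df dg); auto. Qed.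
Lemma dminus (f g : R -> R) x df dg : is_derive f x df -> is_derive g x dg -> is_derive (fun t => f t - g t) x (df - dg).
Proof. intros. apply (is_derive_minus f g x df dg); auto. Qed.
Lemma dscal (f : R -> R) x k df : is_derive f x df -> is_derive (fun t => k * f t) x (k * df).
Proof. intros. apply is_derive_scal; auto. Qed.
Lemma dval (f : R -> R) (x l l' : R) : is_derive f x l -> @eq R l l' -> is_derive f x l'.
Proof. intros H E. rewrite <- E. exact H. Qed.
Lemma dcomp (f g : R -> R) x df dg : is_derive f (g x) df -> is_derive g x dg -> is_derive (fun t => f (g t)) x (dg * df).
Proof. intros. apply (is_derive_comp f g x df dg); auto. Qed.

Lemma cmin (f g : R -> R) x : continuous f x -> continuous g x -> continuous (fun t => Rmin (f t) (g t)) x.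
Proof.
  intros Hf Hg.
  apply (continuous_ext (fun t => / 2 * (f t + g t - Rabs (f t - g t)))).
  intros t. unfold Rmin. destruct Rle_dec; unfold Rabs; destruct Rcase_abs; field_simplify; lra.
  apply cmult. apply cconst. apply cminus. apply cplus; auto. apply cabs. apply cminus; auto.
Qed.


Section Model.
Variables (alpha p1 p2 Lp : R) (p : R -> R).
Hypothesis Ha : 0 < alpha < 1.
Hypothesis Hp12 : p2 <= p1.
Hypothesis Hp1 : p1 < 0.
Hypothesis Hpb : forall t, p2 <= p t <= p1.
Hypothesis HLp : 0 <= Lp.
Hypothesis Hpl : forall x y, Rabs (p x - p y) <= Lp * Rabs (x - y).

Definition q := 2 * alpha / (1 - alpha).
Definition del := (1 - alpha) / 2.
Definition Qp (r : R) := pw q r.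
Definition clR (R r : R) := Rmin R (Rmax 0 r).
Definition psi (R r : R) := pw (q + 1) (clR R r).

Lemma q_pos : 0 < q.
Proof. unfold q. apply Rdiv_lt_0_compat; lra. Qed.
Lemma del_pos : 0 < del.
Proof. unfold del; lra. Qed.
Lemma del_k : del * (q + 2) = 1.
Proof. unfold del, q. field. lra. Qed.
Lemma k_alpha : (q + 2) * alpha = q.
Proof. unfold q. field. lra. Qed.
Lemma del_alpha : 2 * del / (1 - alpha) = 1.
Proof. unfold del. field. lra. Qed.

Lemma clR_bounds R r : 0 <= R -> 0 <= clR R r <= R.
Proof. intros. unfold clR, Rmin, Rmax. repeat destruct Rle_dec; lra. Qed.
Lemma clR_id R r : 0 <= r <= R -> clR R r = r.
Proof. intros. unfold clR, Rmin, Rmax. repeat destruct Rle_dec; lra. Qed.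
Lemma clR_lip R r r' : 0 <= R -> Rabs (clR R r - clR R r') <= Rabs (r - r').
Proof. intros. unfold clR, Rmin, Rmax. repeat destruct Rle_dec; unfold Rabs; repeat destruct Rcase_abs; lra. Qed.

Lemma psi_lip R r r' : 0 < R -> Rabs (psi R r - psi R r') <= (q + 1) * pw q R * Rabs (r - r').
Proof.
  intros HR. unfold psi.
  eapply Rle_trans. apply (pw_lip _ R). pose proof q_pos; lra. auto. apply clR_bounds; lra. apply clR_bounds; lra.
  replace (q + 1 - 1) with q by ring. apply Rmult_le_compat_l.
  apply Rmult_le_pos. pose proof q_pos; lra. apply pw_ge0. apply clR_lip; lra.
Qed.

Lemma psi_bound R r : 0 < R -> 0 <= psi R r <= pw (q + 1) R.
Proof. intros HR. unfold psi. split. apply pw_ge0. apply pw_mono. pose proof q_pos; lra. apply clR_bounds; lra. Qed.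

Lemma psi_true R r : 0 <= r <= R -> psi R r = r * Qp r.
Proof. intros H. unfold psi, Qp. rewrite clR_id by auto. rewrite Rplus_comm, pw_mult, pw_one by lra. ring. Qed.

Definition G1 (r v t : R) := del * v.
Definition G2 (R r v t : R) := r + p t * psi R r.
Definition G3 (R r v t : R) := psi R r.

Definition Lc (R : R) := del + 2 + (- p2) * ((q + 1) * pw q R) + (q + 1) * pw q R + pw (q + 1) R * Lp.

Lemma G_lip R : 0 < R -> forall a1 a2 a3 b1 b2 b3,
  Rabs (G1 a1 a2 a3 - G1 b1 b2 b3) + Rabs (G2 R a1 a2 a3 - G2 R b1 b2 b3) + Rabs (G3 R a1 a2 a3 - G3 R b1 b2 b3)
  <= Lc R * (Rabs (a1 - b1) + Rabs (a2 - b2) + Rabs (a3 - b3)).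
Proof.
  intros HR a1 a2 a3 b1 b2 b3. unfold G1, G2, G3.
  set (Lpsi := (q + 1) * pw q R).
  assert (HLpsi : 0 <= Lpsi) by (unfold Lpsi; apply Rmult_le_pos; [pose proof q_pos; lra| apply pw_ge0]).
  assert (HM : 0 <= pw (q + 1) R) by apply pw_ge0.
  pose proof (psi_lip R a1 b1 HR) as Hps. fold Lpsi in Hps.
  pose proof (psi_bound R b1 HR) as Hpb'.
  assert (E1 : Rabs (del * a2 - del * b2) = del * Rabs (a2 - b2)).
  { rewrite <- Rmult_minus_distr_l, Rabs_mult, Rabs_pos_eq; pose proof del_pos; lra. }
  assert (E2 : Rabs (a1 + p a3 * psi R a1 - (b1 + p b3 * psi R b1)) <=
     Rabs (a1 - b1) + ((- p2) * (Lpsi * Rabs (a1 - b1)) + pw (q + 1) R * (Lp * Rabs (a3 - b3)))).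
  { replace (a1 + p a3 * psi R a1 - (b1 + p b3 * psi R b1)) with
      ((a1 - b1) + (p a3 * (psi R a1 - psi R b1) + psi R b1 * (p a3 - p b3))) by ring.
    eapply Rle_trans. apply Rabs_triang. apply Rplus_le_compat_l.
    eapply Rle_trans. apply Rabs_triang. rewrite !Rabs_mult. apply Rplus_le_compat.
    apply Rmult_le_compat; try apply Rabs_pos. pose proof (Hpb a3). unfold Rabs; destruct Rcase_abs; lra. auto.
    apply Rmult_le_compat; try apply Rabs_pos. rewrite Rabs_pos_eq; lra. apply Hpl. }
  rewrite E1.
  pose proof (Rabs_pos (a1 - b1)). pose proof (Rabs_pos (a2 - b2)). pose proof (Rabs_pos (a3 - b3)).
  assert (Hc1 : (1 + (- p2) * Lpsi + Lpsi) * Rabs (a1 - b1) <= Lc R * Rabs (a1 - b1)).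
  { apply Rmult_le_compat_r; auto. unfold Lc. fold Lpsi. pose proof del_pos. assert (0 <= pw (q+1) R * Lp) by (apply Rmult_le_pos; lra). lra. }
  assert (Hc2 : del * Rabs (a2 - b2) <= Lc R * Rabs (a2 - b2)).
  { apply Rmult_le_compat_r; auto. unfold Lc. fold Lpsi. assert (0 <= pw (q+1) R * Lp) by (apply Rmult_le_pos; lra).
    assert (0 <= - p2 * Lpsi) by (apply Rmult_le_pos; lra). lra. }
  assert (Hc3 : pw (q + 1) R * Lp * Rabs (a3 - b3) <= Lc R * Rabs (a3 - b3)).
  { apply Rmult_le_compat_r; auto. unfold Lc. fold Lpsi. pose proof del_pos. 
    assert (0 <= - p2 * Lpsi) by (apply Rmult_le_pos; lra). lra. }
  assert (Rabs (psi R a1 - psi R b1) <= Lpsi * Rabs (a1 - b1)) by auto.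
  nra.
Qed.

Lemma Lc_pos R : 0 < Lc R.
Proof.
  unfold Lc. pose proof del_pos. pose proof q_pos. pose proof (pw_ge0 q R). pose proof (pw_ge0 (q+1) R).
  assert (0 <= - p2 * ((q + 1) * pw q R)) by (apply Rmult_le_pos; [lra| apply Rmult_le_pos; lra]).
  assert (0 <= (q + 1) * pw q R) by (apply Rmult_le_pos; lra).
  assert (0 <= pw (q + 1) R * Lp) by (apply Rmult_le_pos; lra). lra.
Qed.


Definition uf (x : R) := x * x * Qp x.
Definition P1 := - p1.
Definition P2 := - p2.
Definition r0 := Rmax 1 (pw (/ q) (2 / (P1 * (1 - alpha)))).
Definition U0 := uf r0.

Lemma P1_pos : 0 < P1. Proof. unfold P1; lra. Qed.
Lemma P12 : P1 <= P2. Proof. unfold P1, P2; lra. Qed.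
Lemma r0_ge1 : 1 <= r0. Proof. unfold r0. apply Rmax_l. Qed.

Lemma Q_ge0 x : 0 <= Qp x. Proof. apply pw_ge0. Qed.
Lemma Q_mono a b : a <= b -> Qp a <= Qp b. Proof. intros; apply pw_mono; auto. pose proof q_pos; lra. Qed.

Lemma K0 x : r0 <= x -> 2 / (1 - alpha) <= P1 * Qp x.
Proof.
  intros Hx. set (X := 2 / (P1 * (1 - alpha))).
  assert (HX : 0 < X) by (unfold X; apply Rdiv_lt_0_compat; [lra| apply Rmult_lt_0_compat; [apply P1_pos| lra]]).
  assert (Qp (pw (/ q) X) = X).
  { unfold Qp. rewrite (pw_pos (/ q)) by auto. rewrite pw_pos by apply exp_pos.
    rewrite Rpower_mult, Rinv_l by (pose proof q_pos; lra). apply Rpower_1; auto. }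
  assert (X <= Qp x). { rewrite <- H. apply Q_mono. eapply Rle_trans; [apply Rmax_r| exact Hx]. }
  assert (P1 * X = 2 / (1 - alpha)) by (unfold X; field; split; [lra| pose proof P1_pos; lra]).
  pose proof P1_pos. nra.
Qed.

Lemma K0' x : r0 <= x -> 2 <= P1 * Qp x.
Proof. intros Hx. pose proof (K0 x Hx). assert (E : 2 / (1 - alpha) = 2 + 2 * alpha / (1 - alpha)) by (field; lra).
  assert (0 <= 2 * alpha / (1 - alpha)) by (apply Rdiv_le_0_compat; lra). lra. Qed.

Lemma uf_ge0 x : 0 <= uf x. Proof. unfold uf. pose proof (Q_ge0 x). nra. Qed.
Lemma uf_mono a b : 0 <= a <= b -> uf a <= uf b.
Proof. intros H. unfold uf. pose proof (Q_mono a b ltac:(lra)). pose proof (Q_ge0 a). assert (a * a <= b * b) by nra. nra. Qed.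
Lemma U0_pos : 0 < U0.
Proof. unfold U0, uf. pose proof r0_ge1. assert (0 < Qp r0). unfold Qp. apply pw_gt0. lra. apply Rmult_lt_0_compat; [apply Rmult_lt_0_compat|]; lra. Qed.

Lemma K1 x : r0 <= x -> x * x / (1 - alpha) <= P1 * uf x / 2.
Proof.
  intros Hx. pose proof (K0 x Hx). unfold uf.
  assert (x * x / (1 - alpha) = (x * x) * (2 / (1 - alpha)) / 2) by (field; lra).
  rewrite H0. pose proof r0_ge1. assert (0 <= x * x) by nra.
  assert (P1 * (x * x * Qp x) = (x * x) * (P1 * Qp x)) by ring.
  assert (E2 : P1 * (x * x * Qp x) / 2 = (x * x) * (P1 * Qp x) / 2) by (unfold Rdiv; ring).
  rewrite E2.
  apply Rmult_le_compat_r. lra. apply Rmult_le_compat_l; auto.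
Qed.

Lemma K2 x t : r0 <= x -> x + p t * (x * Qp x) <= - x.
Proof.
  intros Hx. pose proof (K0' x Hx). pose proof (Hpb t). pose proof r0_ge1. pose proof (Q_ge0 x).
  assert (p t * (x * Qp x) <= p1 * (x * Qp x)) by (apply Rmult_le_compat_r; nra).
  unfold P1 in H. nra.
Qed.

Lemma Kfrac K e : 0 <= K -> 0 < e -> K * (e / (K + 1)) < e.
Proof.
  intros HK He. replace (K * (e / (K + 1))) with (e * (K / (K + 1))) by (field; lra).
  assert (K / (K + 1) < 1).
  { apply (Rmult_lt_reg_r (K + 1)). lra. unfold Rdiv. rewrite Rmult_assoc, Rinv_l; lra. }
  assert (0 <= K / (K+1)) by (apply Rdiv_le_0_compat; lra).
  assert (e * (K / (K + 1)) < e * 1) by (apply Rmult_lt_compat_l; lra). lra.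
Qed.

Lemma p_cont x : continuous p x.
Proof.
  apply cont_eps. intros e He. exists (e / (Lp + 1)). split. apply Rdiv_lt_0_compat; lra.
  intros y Hy. eapply Rle_lt_trans. apply Hpl.
  assert (Lp * Rabs (y - x) <= Lp * (e / (Lp + 1))) by (apply Rmult_le_compat_l; lra).
  pose proof (Kfrac Lp e HLp He). lra.
Qed.

Lemma psi_cont R x : 0 < R -> continuous (psi R) x.
Proof.
  intros HR. apply cont_eps. intros e He.
  set (K := (q + 1) * pw q R).
  assert (HK : 0 <= K) by (unfold K; apply Rmult_le_pos; [pose proof q_pos; lra| apply pw_ge0]).
  exists (e / (K + 1)). split. apply Rdiv_lt_0_compat; lra.
  intros y Hy. eapply Rle_lt_trans. apply psi_lip; auto. fold K.
  assert (K * Rabs (y - x) <= K * (e / (K + 1))) by (apply Rmult_le_compat_l; lra).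
  pose proof (Kfrac K e HK He). lra.
Qed.


Section Flight.
Variables (w s Sg : R) (r V T : R -> R).
Definition Rt := w + 1.
Definition nu := Rmin r0 (Rmin 1 (2 * P1 * U0)).
Definition SA := 2 + w / r0.
Definition SF := SA + 3 + w / (del * nu).
Hypothesis Hw1 : r0 <= w.
Hypothesis Hw2 : 8 * P2 * U0 <= w * w.
Hypothesis Hw3 : 2 * r0 / del <= w.
Hypothesis HSg : SF < Sg.
Hypothesis Hcont : forall x, continuous r x /\ continuous V x /\ continuous T x.
Hypothesis Hinit : r 0 = 0 /\ V 0 = w /\ T 0 = s.
Hypothesis Hder : forall x, 0 < x < Sg ->
  is_derive r x (del * V x) /\ is_derive V x (r x + p (T x) * psi Rt (r x)) /\ is_derive T x (psi Rt (r x)).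

Lemma w_pos : 0 < w. Proof. pose proof r0_ge1. lra. Qed.
Lemma nu_pos : 0 < nu.
Proof. unfold nu. pose proof r0_ge1. pose proof U0_pos. pose proof P1_pos.
  apply Rmin_pos. lra. apply Rmin_pos. lra. apply Rmult_lt_0_compat; [|auto]. lra. Qed.
Lemma SA_ge : 2 <= SA.
Proof. unfold SA. pose proof w_pos. pose proof r0_ge1. assert (0 <= w / r0) by (apply Rdiv_le_0_compat; lra). lra. Qed.
Lemma SF_ge : SA + 3 <= SF.
Proof. unfold SF. pose proof w_pos. pose proof nu_pos. pose proof del_pos.
  assert (0 <= w / (del * nu)) by (apply Rdiv_le_0_compat; [lra| apply Rmult_lt_0_compat; lra]). lra. Qed.

Definition GE (c x : R) := / 2 * (V x * V x) - / (1 - alpha) * (r x * r x) - c * uf (r x).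

Lemma uf_deriv x : 0 < x -> is_derive uf x (x * Qp x * (q + 2)).
Proof.
  intros Hx. unfold uf.
  apply (dval _ _ _ _ (dmult (fun t => t * t) Qp x (1 * x + x * 1) (q * Rpower x (q - 1)) (dmult _ _ x 1 1 (is_derive_id x) (is_derive_id x)) (pw_derive q x Hx))).
  unfold Qp. rewrite pw_pos by auto.
  assert (E : Rpower x (q - 1) * x = Rpower x q).
  { replace q with ((q - 1) + 1) at 2 by ring. rewrite Rpower_plus, Rpower_1 by auto. ring. }
  replace (x * x * (q * Rpower x (q - 1))) with (x * q * (Rpower x (q - 1) * x)) by ring.
  rewrite E. ring.
Qed.

Lemma V_cont x : continuous V x. Proof. apply Hcont. Qed.
Lemma r_cont x : continuous r x. Proof. apply Hcont. Qed.
Lemma T_cont x : continuous T x. Proof. apply Hcont. Qed.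

Lemma uf_cont x : continuous uf x.
Proof. unfold uf. apply cmult. apply cmult; apply cid. apply pw_cont. apply q_pos. Qed.

Lemma GE_cont c x : continuous (GE c) x.
Proof.
  unfold GE. apply cminus. apply cminus.
  apply cmult. apply cconst. apply cmult; apply V_cont.
  apply cmult. apply cconst. apply cmult; apply r_cont.
  apply cmult. apply cconst. apply (continuous_comp r uf). apply r_cont. apply uf_cont.
Qed.

Lemma GE_der c x : 0 < x < Sg -> 0 < r x <= Rt ->
  is_derive (GE c) x ((p (T x) - c) * V x * (r x * Qp (r x))).
Proof.
  intros Hx Hr. destruct (Hder x Hx) as [Dr [DV DT]].
  rewrite psi_true in DV by lra.
  unfold GE.
  assert (D1 : is_derive (fun t => / 2 * (V t * V t)) x ((V x * (r x + p (T x) * (r x * Qp (r x))))) ).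
  { apply (dval _ _ _ _ (dscal (fun t => V t * V t) x (/ 2) _ (dmult V V x _ _ DV DV))).
    field. }
  assert (D2 : is_derive (fun t => / (1 - alpha) * (r t * r t)) x (r x * V x)).
  { apply (dval _ _ _ _ (dscal (fun t => r t * r t) x (/ (1 - alpha)) _ (dmult r r x _ _ Dr Dr))).
    pose proof del_alpha. unfold del in *. field. lra. }
  assert (D3 : is_derive (fun t => c * uf (r t)) x (c * (V x * (r x * Qp (r x))))).
  { apply (dval _ _ _ _ (dscal (fun t => uf (r t)) x c _ (dcomp uf r x _ _ (uf_deriv (r x) ltac:(lra)) Dr))).
    pose proof del_k. replace (del * V x * (r x * Qp (r x) * (q + 2))) with ((del * (q + 2)) * (V x * (r x * Qp (r x)))) by ring.
    rewrite H. ring. }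
  apply (dval _ _ _ _ (dminus _ _ x _ _ (dminus _ _ x _ _ D1 D2) D3)).
  ring.
Qed.


Lemma Rt_eq : Rt = w + 1. Proof. reflexivity. Qed.

Lemma V_der_true x : 0 < x < Sg -> 0 <= r x <= Rt -> is_derive V x (r x + p (T x) * (r x * Qp (r x))).
Proof. intros Hx Hr. destruct (Hder x Hx) as [_ [DV _]]. rewrite psi_true in DV; auto. Qed.
Lemma r_der x : 0 < x < Sg -> is_derive r x (del * V x).
Proof. intros Hx. apply (Hder x Hx). Qed.

Lemma GE0 c : GE c 0 = w * w / 2.
Proof. unfold GE. destruct Hinit as [H1 [H2 _]]. rewrite H1, H2. unfold uf. rewrite Rmult_0_l, Rmult_0_l. field. lra. Qed.

Lemma asc_props c : 0 < c < Sg -> (forall x, 0 <= x < c -> 0 < V x /\ r x < Rt) -> 0 <= V c ->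
  (forall a b, 0 <= a <= b -> b <= c -> r a <= r b) /\
  (forall x, 0 < x <= c -> 0 < r x) /\
  (forall y, 0 <= y <= c -> GE p1 y <= w * w / 2 /\ w * w / 2 <= GE p2 y) /\
  (forall y, 0 <= y <= c -> r y <= w).
Proof.
  intros Hc HV HVc. destruct Hinit as [Hr0 [HV0 HT0]].
  assert (Hmono : forall a b, 0 <= a <= b -> b <= c -> r a <= r b).
  { intros a b Hab Hbc. assert (X := deriv_ge r (fun x => del * V x) a b 0 ltac:(lra)).
    cut (0 * (b - a) <= r b - r a). lra. apply X.
    intros x Hx. apply r_der; lra. intros; apply r_cont.
    intros x Hx. pose proof del_pos. destruct (HV x ltac:(lra)). nra. }
  assert (Hpos : forall x, 0 < x <= c -> 0 < r x).
  { pose proof w_pos. destruct (eps_cont V 0 (V_cont 0) (w / 2)) as [d [Hd Hy]]. lra.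
    intros y Hy0. set (y' := Rmin y (d / 2)).
    assert (Hy' : 0 < y' <= y) by (unfold y'; split; [apply Rmin_pos; lra| apply Rmin_l]).
    assert (Hy'd : y' <= d / 2) by apply Rmin_r.
    assert (X := deriv_ge r (fun x => del * V x) 0 y' (del * (w / 2)) ltac:(lra)).
    assert (del * (w / 2) * (y' - 0) <= r y' - r 0).
    { apply X. intros x Hx. apply r_der; lra. intros; apply r_cont.
      intros x Hx. assert (Rabs (x - 0) < d) by (rewrite Rminus_0_r, Rabs_pos_eq; lra).
      specialize (Hy x H0). rewrite HV0 in Hy. pose proof del_pos.
      apply Rmult_le_compat_l. lra. unfold Rabs in Hy; destruct Rcase_abs in Hy; lra. }
    pose proof (Hmono y' y ltac:(lra) ltac:(lra)). pose proof del_pos.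
    assert (0 < del * (w / 2) * (y' - 0)) by (apply Rmult_lt_0_compat; [apply Rmult_lt_0_compat|]; lra).
    lra. }
  assert (HGE : forall y, 0 <= y <= c -> GE p1 y <= w * w / 2 /\ w * w / 2 <= GE p2 y).
  { intros y Hy. split.
    - rewrite <- (GE0 p1). apply (mono_nonincr (GE p1) (fun x => (p (T x) - p1) * V x * (r x * Qp (r x))) 0 y). lra.
      intros x Hx. apply GE_der. lra. split. apply Hpos; lra. destruct (HV x ltac:(lra)); lra.
      intros; apply GE_cont.
      intros x Hx. pose proof (Hpb (T x)). destruct (HV x ltac:(lra)). pose proof (Hpos x ltac:(lra)). pose proof (Q_ge0 (r x)).
      assert (0 <= V x * (r x * Qp (r x))) by (apply Rmult_le_pos; [lra| apply Rmult_le_pos; lra]).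
      rewrite Rmult_assoc. assert (p (T x) - p1 <= 0) by lra. nra.
    - assert (X := deriv_ge (GE p2) (fun x => (p (T x) - p2) * V x * (r x * Qp (r x))) 0 y 0 ltac:(lra)).
      rewrite <- (GE0 p2). cut (0 * (y - 0) <= GE p2 y - GE p2 0). lra. apply X.
      intros x Hx. apply GE_der. lra. split. apply Hpos; lra. destruct (HV x ltac:(lra)); lra.
      intros; apply GE_cont.
      intros x Hx. pose proof (Hpb (T x)). destruct (HV x ltac:(lra)). pose proof (Hpos x ltac:(lra)). pose proof (Q_ge0 (r x)).
      assert (0 <= V x * (r x * Qp (r x))) by (apply Rmult_le_pos; [lra| apply Rmult_le_pos; lra]).
      rewrite Rmult_assoc. assert (0 <= p (T x) - p2) by lra. apply Rmult_le_pos; lra. }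
  split; [auto|]. split; [auto|]. split; [auto|].
  intros y Hy. destruct (Rlt_le_dec (r y) r0) as [Hl|Hl]. lra.
  destruct (HGE y Hy) as [G1 _]. unfold GE in G1.
  pose proof (K1 (r y) Hl). pose proof (K0' (r y) Hl). pose proof r0_ge1.
  assert (E : - p1 * uf (r y) = P1 * uf (r y)) by (unfold P1; ring).
  assert (HVV : 0 <= / 2 * (V y * V y)) by (apply Rmult_le_pos; [lra| apply Rle_0_sqr]).
  assert (P1 * uf (r y) <= w * w). { 
    assert (- p1 * uf (r y) = P1 * uf (r y)) by (unfold P1; ring).
    assert (/ (1 - alpha) * (r y * r y) = r y * r y / (1 - alpha)) by (unfold Rdiv; ring). lra. }
  unfold uf in H2. 
  assert (2 * (r y * r y) <= P1 * (r y * r y * Qp (r y))).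
  { replace (P1 * (r y * r y * Qp (r y))) with ((r y * r y) * (P1 * Qp (r y))) by ring.
    rewrite Rmult_comm. apply Rmult_le_compat_l. nra. lra. }
  assert (0 <= r y * r y) by nra. assert (r y * r y <= w * w) by lra. pose proof w_pos.
  destruct (Rle_lt_dec (r y) w) as [|Hgt]; auto. exfalso.
  assert (w * w < r y * r y) by (apply Rmult_le_0_lt_compat; lra). lra.
Qed.


Lemma rmin0 a b : Rmin a b = 0 -> 0 <= a /\ 0 <= b /\ (a = 0 \/ b = 0).
Proof. unfold Rmin. destruct Rle_dec; intros; subst; lra. Qed.
Lemma rminpos a b : 0 < Rmin a b -> 0 < a /\ 0 < b.
Proof. unfold Rmin. destruct Rle_dec; intros; lra. Qed.

Lemma SA_lt : SA < Sg. Proof. pose proof SF_ge. lra. Qed.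

Lemma ascent : exists sA, 0 < sA <= SA /\ V sA = 0 /\ (forall x, 0 <= x < sA -> 0 < V x) /\
  (forall x, 0 < x <= sA -> 0 < r x) /\ (forall x, 0 <= x <= sA -> r x <= w) /\
  (forall a b, 0 <= a <= b -> b <= sA -> r a <= r b) /\
  w * w / 2 <= P2 * uf (r sA).
Proof.
  destruct Hinit as [Hr0 [HV0 HT0]]. pose proof w_pos. pose proof SA_ge. pose proof SA_lt.
  set (h := fun x => Rmin (V x) (Rt - r x)).
  assert (Hhc : forall x, continuous h x).
  { intros x. unfold h. apply cmin. apply V_cont. apply cminus. apply cconst. apply r_cont. }
  assert (Hh0 : 0 < h 0). { unfold h. rewrite HV0, Hr0, Rt_eq. unfold Rmin; destruct Rle_dec; lra. }
  destruct (Classical_Prop.classic (exists x, 0 <= x <= SA /\ h x <= 0)) as [[x [Hx Hhx]]|Hno].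
  - destruct (first_zero h 0 x ltac:(lra) Hhc Hh0 Hhx) as [c [Hc [Hhc0 Hbef]]].
    assert (HVr : forall y, 0 <= y < c -> 0 < V y /\ r y < Rt).
    { intros y Hy. specialize (Hbef y Hy). unfold h in Hbef. apply rminpos in Hbef. lra. }
    unfold h in Hhc0. apply rmin0 in Hhc0. destruct Hhc0 as [HVc [HRc Hor]].
    destruct (asc_props c ltac:(lra) HVr HVc) as [Hmono [Hpos [HGE Hrw]]].
    assert (HVc0 : V c = 0).
    { destruct Hor as [|Hor]; auto. pose proof (Hrw c ltac:(lra)). rewrite Rt_eq in Hor. lra. }
    exists c. split. lra. split. auto. split.
    { intros y Hy. apply HVr; auto. }
    split. auto. split. auto. split. auto.
    destruct (HGE c ltac:(lra)) as [_ G2]. unfold GE in G2. rewrite HVc0 in G2.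
    assert (0 <= / (1 - alpha) * (r c * r c)).
    { apply Rmult_le_pos. left; apply Rinv_0_lt_compat; lra. nra. }
    unfold P2. lra.
  - exfalso.
    assert (HVr : forall y, 0 <= y < SA -> 0 < V y /\ r y < Rt).
    { intros y Hy. assert (0 < h y). { apply Rnot_le_lt. intros Hle. apply Hno. exists y. split; [lra|auto]. }
      unfold h in H2. apply rminpos in H2. lra. }
    assert (HVS : 0 < V SA).
    { assert (0 < h SA). { apply Rnot_le_lt. intros Hle. apply Hno. exists SA. split; [lra|auto]. }
      unfold h in H2. apply rminpos in H2. lra. }
    destruct (asc_props SA ltac:(lra) HVr ltac:(lra)) as [Hmono [Hpos [HGE Hrw]]].
    assert (Hr1 : r0 <= r 1).
    { apply Rnot_lt_le. intros Hlt.
      assert (HV1 : forall y, 0 < y < 1 -> w / 2 <= V y).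
      { intros y Hy. destruct (HGE y ltac:(lra)) as [_ G2]. unfold GE in G2.
        pose proof (Hmono y 1 ltac:(lra) ltac:(lra)). pose proof (Hpos y ltac:(lra)).
        assert (uf (r y) <= U0) by (unfold U0; apply uf_mono; lra).
        assert (0 <= / (1 - alpha) * (r y * r y)).
        { apply Rmult_le_pos. left; apply Rinv_0_lt_compat; lra. nra. }
        pose proof P12. pose proof P1_pos. pose proof U0_pos.
        assert (P2 * uf (r y) <= P2 * U0) by (apply Rmult_le_compat_l; lra).
        assert (- p2 * uf (r y) = P2 * uf (r y)) by (unfold P2; ring).
        assert (0 <= w * w) by nra. assert (w * w / 4 <= V y * V y) by lra.
        destruct (HVr y ltac:(lra)).
        destruct (Rle_lt_dec (w / 2) (V y)); auto.
        assert (V y * V y < w / 2 * (w / 2)) by (apply Rmult_le_0_lt_compat; lra). lra. }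
      assert (X := deriv_ge r (fun x => del * V x) 0 1 (del * (w / 2)) ltac:(lra)).
      assert (del * (w / 2) * (1 - 0) <= r 1 - r 0).
      { apply X. intros y Hy. apply r_der; lra. intros; apply r_cont.
        intros y Hy. apply Rmult_le_compat_l. pose proof del_pos; lra. auto. }
      rewrite Hr0 in H2. pose proof del_pos.
      assert (r0 <= del * (w / 2)).
      { assert (2 * r0 / del * del <= w * del) by (apply Rmult_le_compat_r; lra).
        unfold Rdiv in H4. rewrite Rmult_assoc, Rinv_l in H4 by lra. lra. }
      lra. }
    assert (HV1 : V 1 <= w).
    { destruct (HGE 1 ltac:(lra)) as [G1 _]. unfold GE in G1.
      pose proof (K1 (r 1) Hr1).
      assert (- p1 * uf (r 1) = P1 * uf (r 1)) by (unfold P1; ring).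
      assert (/ (1 - alpha) * (r 1 * r 1) = r 1 * r 1 / (1 - alpha)) by (unfold Rdiv; ring).
      pose proof P1_pos. pose proof (uf_ge0 (r 1)).
      assert (V 1 * V 1 <= w * w) by nra.
      destruct (Rle_lt_dec (V 1) w); auto.
      assert (w * w < V 1 * V 1) by (apply Rmult_le_0_lt_compat; lra). lra. }
    assert (X := deriv_le V (fun x => r x + p (T x) * (r x * Qp (r x))) 1 SA (- r0) ltac:(lra)).
    assert (V SA - V 1 <= - r0 * (SA - 1)).
    { apply X. intros y Hy. apply V_der_true. lra. split. pose proof (Hpos y ltac:(lra)); lra.
      pose proof (Hrw y ltac:(lra)). rewrite Rt_eq; lra.
      intros; apply V_cont.
      intros y Hy. pose proof (Hmono 1 y ltac:(lra) ltac:(lra)).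
      pose proof (K2 (r y) (T y) ltac:(lra)). lra. }
    assert (r0 * (SA - 1) = r0 + w).
    { unfold SA. pose proof r0_ge1. field. lra. }
    pose proof r0_ge1. lra.
Qed.


Lemma descent : exists sE, 0 < sE < Sg /\ r sE = 0 /\ V sE < 0 /\ P1 * (w * w) <= 2 * P2 * (V sE * V sE) /\
  (forall x, 0 < x < sE -> 0 < r x /\ r x <= w).
Proof.
  destruct Hinit as [Hr0 [HV0 HT0]]. pose proof w_pos. pose proof SA_ge. pose proof SA_lt. pose proof SF_ge.
  pose proof r0_ge1. pose proof P1_pos. pose proof P12. pose proof U0_pos. pose proof nu_pos. pose proof del_pos.
  destruct ascent as [sA [HsA [HVA [HVpos [Hrpos [Hrw [Hmono Huf]]]]]]].
  set (rH := r sA) in *.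
  assert (HrH0 : 0 < rH) by (apply Hrpos; lra).
  assert (HrHw : rH <= w) by (apply Hrw; lra).
  assert (Huf4 : 4 * U0 <= uf rH).
  { assert (Hq : P2 * (4 * U0) <= P2 * uf rH) by lra. apply Rmult_le_reg_l in Hq; lra. }
  assert (HrH : r0 < rH).
  { apply Rnot_le_lt. intros Hle. assert (uf rH <= U0) by (unfold U0; apply uf_mono; lra). lra. }
  destruct (eps_cont r sA (r_cont sA) (Rmin (rH - r0) 1)) as [d [Hd Hnear]].
  { apply Rmin_pos; lra. }
  assert (Hnear' : forall x, Rabs (x - sA) < d -> r0 < r x /\ r x < Rt).
  { intros x Hx. specialize (Hnear x Hx). pose proof (Rmin_l (rH - r0) 1). pose proof (Rmin_r (rH - r0) 1).
    rewrite Rt_eq. fold rH in Hnear. unfold Rabs in Hnear; destruct Rcase_abs in Hnear; lra. }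
  set (sB := sA + Rmin (d / 2) (1 / 2)).
  assert (HsB : sA < sB <= sA + 1 / 2).
  { unfold sB. split. assert (0 < Rmin (d/2) (1/2)) by (apply Rmin_pos; lra). lra. pose proof (Rmin_r (d/2) (1/2)). lra. }
  assert (HsBd : sB - sA <= d / 2) by (unfold sB; pose proof (Rmin_l (d/2) (1/2)); lra).
  assert (HAB : forall x, sA <= x <= sB -> r0 < r x /\ r x < Rt /\ V x <= - r0 * (x - sA)).
  { intros x Hx. destruct (Hnear' x ltac:(rewrite Rabs_pos_eq; lra)) as [Ha1 Hb1]. split; [lra|]. split; [lra|].
    assert (X := deriv_le V (fun x => r x + p (T x) * (r x * Qp (r x))) sA x (- r0) ltac:(lra)).
    cut (V x - V sA <= - r0 * (x - sA)). lra. apply X.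
    intros y Hy. destruct (Hnear' y ltac:(rewrite Rabs_pos_eq; lra)). apply V_der_true. pose proof SF_ge; lra. lra.
    intros; apply V_cont.
    intros y Hy. destruct (Hnear' y ltac:(rewrite Rabs_pos_eq; lra)). pose proof (K2 (r y) (T y) ltac:(lra)). lra. }
  set (C0 := P1 * uf rH / 2).
  assert (HGA : C0 <= GE p1 sA).
  { unfold GE, C0. rewrite HVA. fold rH. pose proof (K1 rH ltac:(lra)).
    assert (/ (1 - alpha) * (rH * rH) = rH * rH / (1 - alpha)) by (unfold Rdiv; ring).
    assert (- p1 * uf rH = P1 * uf rH) by (unfold P1; ring). lra. }
  assert (HC0 : 2 * P1 * U0 <= C0).
  { unfold C0. assert (P1 * (4 * U0) <= P1 * uf rH) by (apply Rmult_le_compat_l; lra). lra. }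
  set (SD := sB + 1 + w / (del * nu)).
  assert (HwD : 0 <= w / (del * nu)) by (apply Rdiv_le_0_compat; [lra| apply Rmult_lt_0_compat; lra]).
  assert (HSD : SD <= SF) by (unfold SD, SF; lra).
  assert (Hdesc : forall c, sB <= c <= SD -> (forall y, sB <= y < c -> 0 < r y /\ V y < 0) -> 0 <= r c -> V c <= 0 ->
     (forall y, sA <= y <= c -> V y <= 0) /\
     (forall a b, sA <= a <= b -> b <= c -> r b <= r a) /\
     (forall y, sA <= y < c -> 0 < r y) /\
     (forall y, sA <= y <= c -> 0 <= r y <= w) /\
     (forall y, sA <= y <= c -> C0 <= GE p1 y)).
  { intros c Hc Hin Hrc HVc.
    assert (HV : forall y, sA <= y <= c -> V y <= 0).
    { intros y Hy. destruct (Rle_lt_dec y sB). pose proof (HAB y ltac:(lra)). nra.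
      destruct (Req_dec y c). subst; auto. pose proof (Hin y ltac:(lra)). lra. }
    assert (Hm : forall a b, sA <= a <= b -> b <= c -> r b <= r a).
    { intros a b Hab Hbc. assert (X := deriv_le r (fun x => del * V x) a b 0 ltac:(lra)).
      cut (r b - r a <= 0 * (b - a)). lra. apply X.
      intros x Hx. apply r_der; lra. intros; apply r_cont.
      intros x Hx. pose proof (HV x ltac:(lra)). nra. }
    assert (Hp : forall y, sA <= y < c -> 0 < r y).
    { intros y Hy. destruct (Rle_lt_dec y sB). pose proof (HAB y ltac:(lra)). lra. apply Hin; lra. }
    assert (Hb : forall y, sA <= y <= c -> 0 <= r y <= w).
    { intros y Hy. split. destruct (Req_dec y c). subst; auto. pose proof (Hp y ltac:(lra)); lra.
      pose proof (Hm sA y ltac:(lra) ltac:(lra)) as Hq. fold rH in Hq. lra. }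
    split; [auto|]. split; [auto|]. split; [auto|]. split; [auto|].
    intros y Hy. eapply Rle_trans. apply HGA.
    assert (X := deriv_ge (GE p1) (fun x => (p (T x) - p1) * V x * (r x * Qp (r x))) sA y 0 ltac:(lra)).
    cut (0 * (y - sA) <= GE p1 y - GE p1 sA). lra. apply X.
    intros x Hx. apply GE_der. pose proof SF_ge; lra. split. apply Hp; lra. pose proof (Hb x ltac:(lra)). rewrite Rt_eq; lra.
    intros; apply GE_cont.
    intros x Hx. pose proof (Hpb (T x)). pose proof (HV x ltac:(lra)). pose proof (Hp x ltac:(lra)). pose proof (Q_ge0 (r x)).
    assert (0 <= r x * Qp (r x)) by (apply Rmult_le_pos; lra).
    assert (0 <= (p (T x) - p1) * V x) by nra. apply Rmult_le_pos; lra. }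
  set (g := fun x => Rmin (r x) (- V x)).
  assert (Hgc : forall x, continuous g x).
  { intros x. unfold g. apply cmin. apply r_cont. apply (continuous_opp V). apply V_cont. }
  assert (HgB : 0 < g sB).
  { unfold g. destruct (HAB sB ltac:(lra)) as [A1 [_ A2]]. unfold Rmin; destruct Rle_dec; nra. }
  destruct (Classical_Prop.classic (exists x, sB <= x <= SD /\ g x <= 0)) as [[x [Hx Hgx]]|Hno].
  2:{ exfalso.
      assert (Hin : forall y, sB <= y <= SD -> 0 < r y /\ V y < 0).
      { intros y Hy. assert (Hgy : 0 < g y). { apply Rnot_le_lt. intros Hle. apply Hno. exists y. auto. }
        unfold g in Hgy. apply rminpos in Hgy. lra. }
      destruct (Hin SD ltac:(unfold SD; lra)) as [HrSD HVSD].
      destruct (Hdesc SD ltac:(unfold SD; lra) ltac:(intros y Hy; apply Hin; lra) ltac:(lra) ltac:(lra)) as [HV [Hm [Hp [Hb HGE]]]].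
      assert (Hspeed : forall y, sA + 1 <= y <= SD -> V y <= - nu).
      { intros y Hy. destruct (Rlt_le_dec (r y) r0) as [Hl|Hl].
        - pose proof (HGE y ltac:(lra)) as HG. unfold GE in HG.
          pose proof (Hb y ltac:(lra)).
          assert (uf (r y) <= U0) by (unfold U0; apply uf_mono; lra).
          assert (0 <= / (1 - alpha) * (r y * r y)).
          { apply Rmult_le_pos. left; apply Rinv_0_lt_compat; lra. nra. }
          assert (- p1 * uf (r y) = P1 * uf (r y)) by (unfold P1; ring).
          assert (P1 * uf (r y) <= P1 * U0) by (apply Rmult_le_compat_l; lra).
          assert (HVV : 2 * P1 * U0 <= V y * V y) by lra.
          assert (nu <= 1) by (unfold nu; pose proof (Rmin_r r0 (Rmin 1 (2 * P1 * U0))); pose proof (Rmin_l 1 (2 * P1 * U0)); lra).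
          assert (nu <= 2 * P1 * U0) by (unfold nu; pose proof (Rmin_r r0 (Rmin 1 (2 * P1 * U0))); pose proof (Rmin_r 1 (2 * P1 * U0)); lra).
          assert (nu * nu <= nu) by nra.
          assert (HVy : V y < 0). { apply Hin. lra. }
          destruct (Rle_lt_dec (V y) (- nu)); auto.
          assert (V y * V y < nu * nu) by nra. lra.
        - assert (X := deriv_le V (fun x => r x + p (T x) * (r x * Qp (r x))) sA y (- r0) ltac:(lra)).
          assert (V y - V sA <= - r0 * (y - sA)).
          { apply X. intros z Hz. apply V_der_true. pose proof SF_ge; lra. pose proof (Hb z ltac:(lra)). rewrite Rt_eq; lra.
            intros; apply V_cont.
            intros z Hz. pose proof (Hm z y ltac:(lra) ltac:(lra)). pose proof (K2 (r z) (T z) ltac:(lra)). lra. }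
          assert (nu <= r0) by (unfold nu; apply Rmin_l). nra. }
      assert (X := deriv_le r (fun x => del * V x) (sA + 1) SD (- (del * nu)) ltac:(unfold SD; lra)).
      assert (r SD - r (sA + 1) <= - (del * nu) * (SD - (sA + 1))).
      { apply X. intros z Hz. apply r_der. pose proof SF_ge; lra. intros; apply r_cont.
        intros z Hz. pose proof (Hspeed z ltac:(lra)). nra. }
      assert (r (sA + 1) <= w) by (pose proof (Hb (sA + 1) ltac:(unfold SD; lra)); lra).
      assert (del * nu * (SD - (sA + 1)) > w).
      { assert (E : del * nu * (w / (del * nu)) = w) by (field; lra).
        assert (SD - (sA + 1) > w / (del * nu)) by (unfold SD; lra).
        assert (0 < del * nu) by (apply Rmult_lt_0_compat; lra).
        assert (del * nu * (w / (del * nu)) < del * nu * (SD - (sA + 1))) by (apply Rmult_lt_compat_l; lra). lra. }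
      lra. }
  destruct (first_zero g sB x ltac:(lra) Hgc HgB Hgx) as [c [Hc [Hgc0 Hbef]]].
  assert (Hin : forall y, sB <= y < c -> 0 < r y /\ V y < 0).
  { intros y Hy. specialize (Hbef y Hy). unfold g in Hbef. apply rminpos in Hbef. lra. }
  unfold g in Hgc0. apply rmin0 in Hgc0. destruct Hgc0 as [Hrc [HVc Hor]].
  destruct (Hdesc c ltac:(lra) Hin Hrc ltac:(lra)) as [HV [Hm [Hp [Hb HGE]]]].
  assert (HcSg : c < Sg) by (pose proof SF_ge; lra).
  assert (HVc0 : V c <> 0).
  { intros E. destruct (Rlt_le_dec (r c) r0) as [Hl|Hl].
    - pose proof (HGE c ltac:(lra)) as HG. unfold GE in HG. rewrite E in HG.
      assert (uf (r c) <= U0) by (unfold U0; apply uf_mono; lra).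
      assert (0 <= / (1 - alpha) * (r c * r c)).
      { apply Rmult_le_pos. left; apply Rinv_0_lt_compat; lra. nra. }
      assert (- p1 * uf (r c) = P1 * uf (r c)) by (unfold P1; ring).
      assert (P1 * uf (r c) <= P1 * U0) by (apply Rmult_le_compat_l; lra).
      assert (0 < P1 * U0) by (apply Rmult_lt_0_compat; lra).
      lra.
    - apply (no_up_cross V (fun x => r x + p (T x) * psi Rt (r x)) sB c). lra.
      intros y Hy. apply (Hder y). lra.
      apply cplus. apply r_cont. apply cmult. apply (continuous_comp T p). apply T_cont. apply p_cont.
      apply (continuous_comp r (psi Rt)). apply r_cont. apply psi_cont. rewrite Rt_eq; lra.
      auto. intros y Hy. apply Hin; lra.
      rewrite psi_true. pose proof (K2 (r c) (T c) Hl). lra. pose proof (Hb c ltac:(lra)). rewrite Rt_eq; lra. }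
  assert (Hrc0 : r c = 0) by (destruct Hor as [Hor|Hor]; [auto| exfalso; apply HVc0; lra]).
  exists c. split. lra. split. auto. split. lra. split.
  - pose proof (HGE c ltac:(lra)) as HG. unfold GE in HG. rewrite Hrc0 in HG.
    unfold uf in HG. rewrite !Rmult_0_l, Rmult_0_r in HG.
    assert (HVV : P1 * uf rH <= V c * V c) by (unfold C0 in HG; lra).
    assert (P1 * (w * w) <= P1 * (2 * P2 * uf rH)) by (apply Rmult_le_compat_l; lra).
    assert (2 * P2 * (P1 * uf rH) <= 2 * P2 * (V c * V c)) by (apply Rmult_le_compat_l; lra).
    assert (P1 * (2 * P2 * uf rH) = 2 * P2 * (P1 * uf rH)) by ring. lra.
  - intros y Hy. destruct (Rle_lt_dec y sA).
    split. apply Hrpos; lra. apply Hrw; lra.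
    split. apply Hp; lra. apply Hb; lra.
Qed.


Section TFrame.
Variable sE : R.
Hypothesis HsE : 0 < sE < Sg.
Hypothesis HrE : r sE = 0.
Hypothesis Hrin : forall x, 0 < x < sE -> 0 < r x /\ r x <= w.

Lemma psi_in x : 0 < x < sE -> psi Rt (r x) = r x * Qp (r x).
Proof. intros Hx. apply psi_true. destruct (Hrin x Hx). rewrite Rt_eq. lra. Qed.
Lemma psi_in_pos x : 0 < x < sE -> 0 < psi Rt (r x).
Proof. intros Hx. rewrite psi_in by auto. destruct (Hrin x Hx). apply Rmult_lt_0_compat; auto. apply pw_gt0; auto. Qed.
Lemma T_der x : 0 < x < sE -> is_derive T x (psi Rt (r x)).
Proof. intros Hx. apply (Hder x). lra. Qed.

Lemma T_incr a b : 0 <= a -> a < b -> b <= sE -> T a < T b.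
Proof.
  intros Ha0 Hab Hb.
  set (a' := a + (b - a) / 3). set (b' := b - (b - a) / 3).
  assert (H1 : 0 * (a' - a) <= T a' - T a).
  { apply (deriv_ge T (fun x => psi Rt (r x))). unfold a'; lra.
    intros x Hx. apply T_der. unfold a', b' in *; lra. intros; apply T_cont.
    intros x Hx. left. apply psi_in_pos. unfold a' in *; lra. }
  assert (H2 : 0 * (b - b') <= T b - T b').
  { apply (deriv_ge T (fun x => psi Rt (r x))). unfold b'; lra.
    intros x Hx. apply T_der. unfold a', b' in *; lra. intros; apply T_cont.
    intros x Hx. left. apply psi_in_pos. unfold b' in *; lra. }
  destruct (MVT_gen T a' b' (fun x => psi Rt (r x))) as [c [Hc Hm]].
  { intros x Hx. rewrite Rmin_left, Rmax_right in Hx by (unfold a', b'; lra). apply T_der. unfold a', b' in *; lra. }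
  { intros x Hx. apply continuity_pt_filterlim. apply T_cont. }
  rewrite Rmin_left, Rmax_right in Hc by (unfold a', b'; lra).
  assert (0 < psi Rt (r c)) by (apply psi_in_pos; unfold a', b' in *; lra).
  assert (0 < b' - a') by (unfold a', b'; lra).
  assert (0 < T b' - T a') by (rewrite Hm; apply Rmult_lt_0_compat; lra).
  lra.
Qed.

Lemma T_le a b : 0 <= a -> a <= b -> b <= sE -> T a <= T b.
Proof. intros. destruct (Req_dec a b). subst; lra. left; apply T_incr; lra. Qed.

Definition sEnd := T sE.
Definition Sinv (t : R) := epsilon (inhabits 0) (fun x => 0 <= x <= sE /\ T x = t).

Lemma Sinv_spec t : s <= t <= sEnd -> 0 <= Sinv t <= sE /\ T (Sinv t) = t.
Proof.
  intros Ht. unfold Sinv. apply epsilon_spec.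
  destruct Hinit as [_ [_ HT0]].
  destruct (IVT_gen_consistent T 0 sE t T_cont) as [x [Hx Hx']].
  { pose proof (T_le 0 sE ltac:(lra) ltac:(lra) ltac:(lra)). rewrite Rmin_left, Rmax_right by lra. unfold sEnd in Ht. lra. }
  exists x. rewrite Rmin_left, Rmax_right in Hx by lra. auto.
Qed.

Lemma Sinv_T x : 0 <= x <= sE -> Sinv (T x) = x.
Proof.
  intros Hx. destruct Hinit as [_ [_ HT0]].
  destruct (Sinv_spec (T x)) as [H1 H2].
  { unfold sEnd. rewrite <- HT0. split; apply T_le; lra. }
  destruct (Rtotal_order (Sinv (T x)) x) as [Hl|[He|Hg]]; auto.
  pose proof (T_incr (Sinv (T x)) x ltac:(lra) Hl ltac:(lra)). lra.
  pose proof (T_incr x (Sinv (T x)) ltac:(lra) Hg ltac:(lra)). lra.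
Qed.

Lemma s_lt_sEnd : s < sEnd.
Proof. destruct Hinit as [_ [_ HT0]]. rewrite <- HT0. unfold sEnd. apply T_incr; lra. Qed.

Lemma Sinv_in t : s < t < sEnd -> 0 < Sinv t < sE.
Proof.
  intros Ht. destruct Hinit as [_ [_ HT0]]. destruct (Sinv_spec t ltac:(lra)) as [H1 H2].
  split. destruct (Req_dec (Sinv t) 0) as [E|E]. rewrite E in H2. lra. lra.
  destruct (Req_dec (Sinv t) sE) as [E|E]. rewrite E in H2. unfold sEnd in Ht. lra. lra.
Qed.

Lemma Sinv_lt t x : s <= t <= sEnd -> 0 <= x <= sE -> t < T x -> Sinv t < x.
Proof.
  intros Ht Hx Htx. destruct (Sinv_spec t Ht) as [H1 H2].
  apply Rnot_le_lt. intros Hle. pose proof (T_le x (Sinv t) ltac:(lra) Hle ltac:(lra)). lra.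
Qed.
Lemma Sinv_gt t x : s <= t <= sEnd -> 0 <= x <= sE -> T x < t -> x < Sinv t.
Proof.
  intros Ht Hx Htx. destruct (Sinv_spec t Ht) as [H1 H2].
  apply Rnot_le_lt. intros Hle. pose proof (T_le (Sinv t) x ltac:(lra) Hle ltac:(lra)). lra.
Qed.


Lemma Sinv_derive t : s < t < sEnd -> is_derive Sinv t (1 / psi Rt (r (Sinv t))).
Proof.
  intros Ht. destruct Hinit as [_ [_ HT0]].
  destruct (Sinv_in t Ht) as [Hs1 Hs2]. destruct (Sinv_spec t ltac:(lra)) as [_ HTS].
  set (sg := Sinv t) in *.
  set (a := sg / 2). set (b := (sg + sE) / 2).
  assert (Hab : 0 < a < sg /\ sg < b < sE) by (unfold a, b; lra).
  assert (HTa : T a < t) by (rewrite <- HTS; apply T_incr; lra).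
  assert (HTb : t < T b) by (rewrite <- HTS; apply T_incr; lra).
  assert (HTa0 : s <= T a) by (rewrite <- HT0; apply T_le; lra).
  assert (HTbE : T b <= sEnd) by (unfold sEnd; apply T_le; lra).
  apply is_derive_Reals.
  assert (HcS : continuity_pt Sinv t).
  { apply (continuity_pt_recip_interv T Sinv a b). lra.
    intros x y Hx Hxy Hy. apply T_incr; lra.
    intros x Hx1 Hx2. unfold comp, id. apply Sinv_spec. lra.
    intros x Hx1 Hx2. destruct (Sinv_spec x ltac:(lra)) as [H1 H2]. split.
      apply Rnot_lt_le. intros Hl. pose proof (T_incr (Sinv x) a ltac:(lra) Hl ltac:(lra)).
      destruct (Req_dec x (T a)). subst x. rewrite Sinv_T in Hl; lra. lra.
      apply Rnot_lt_le. intros Hl. pose proof (T_incr b (Sinv x) ltac:(lra) Hl ltac:(lra)).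
      destruct (Req_dec x (T b)). subst x. rewrite Sinv_T in Hl; lra. lra.
    intros x Hx. apply continuity_pt_filterlim. apply T_cont.
    lra. }
  assert (E1 : Sinv (T a) = a) by (apply Sinv_T; lra).
  assert (E2 : Sinv (T b) = b) by (apply Sinv_T; lra).
  apply (inv_deriv T Sinv (fun x => psi Rt (r x)) (T a) (T b) t). lra. lra.
  - intros z Hz. rewrite E1, E2 in Hz. apply is_derive_Reals. apply T_der. lra.
  - auto.
  - rewrite E1, E2. fold sg. lra.
  - intros y Hy. apply Sinv_spec. lra.
  - apply Rgt_not_eq. apply psi_in_pos. fold sg. lra.
Qed.

Definition uF (t : R) := pw (q + 2) (r (Sinv t)).
Definition vF (t : R) := V (Sinv t).

Lemma uF_der t : s < t < sEnd -> 0 < uF t /\ is_derive uF t (vF t) /\ is_derive vF t (/ Rpower (uF t) alpha + p t).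
Proof.
  intros Ht. destruct (Sinv_in t Ht) as [Hs1 Hs2]. destruct (Sinv_spec t ltac:(lra)) as [_ HTS].
  pose proof (Sinv_derive t Ht) as DS.
  set (sg := Sinv t) in *.
  destruct (Hrin sg ltac:(lra)) as [Hr1 Hr2].
  assert (Hps : psi Rt (r sg) = r sg * Qp (r sg)) by (apply psi_in; lra).
  assert (HQ : 0 < Qp (r sg)) by (apply pw_gt0; auto).
  assert (Hu : uF t = Rpower (r sg) (q + 2)) by (unfold uF; fold sg; apply pw_pos; auto).
  split. rewrite Hu. apply exp_pos.
  split.
  - unfold uF, vF. fold sg.
    assert (D1 := dcomp r Sinv t _ _ (r_der sg ltac:(lra)) DS). fold sg in D1.
    assert (D2 := dcomp (pw (q + 2)) (fun t => r (Sinv t)) t _ _ (pw_derive (q + 2) (r sg) Hr1) D1).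
    apply (dval _ _ _ _ D2).
    rewrite Hps.
    assert (E : Rpower (r sg) (q + 2 - 1) = r sg * Qp (r sg)).
    { replace (q + 2 - 1) with (1 + q) by ring. rewrite Rpower_plus, Rpower_1 by auto. unfold Qp. rewrite pw_pos; auto. }
    rewrite E. pose proof del_k. field_simplify. 2:{ split; lra. }
    replace (del * V sg * q + 2 * del * V sg) with (del * (q + 2) * V sg) by ring. rewrite H. ring.
  - unfold vF. fold sg.
    destruct (Hder sg ltac:(lra)) as [_ [DV _]].
    assert (D := dcomp V Sinv t _ _ DV DS). fold sg in D.
    apply (dval _ _ _ _ D).
    rewrite Hps, Hu, HTS. rewrite Rpower_mult, k_alpha.
    unfold Qp in HQ |- *. rewrite pw_pos in HQ by auto. rewrite pw_pos by auto.
    field. split; lra.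
Qed.

Lemma uF_s : uF s = 0.
Proof. destruct Hinit as [Hr0 [_ HT0]]. unfold uF. rewrite <- HT0, Sinv_T by lra. rewrite Hr0. apply pw_npos; lra. Qed.
Lemma uF_sEnd : uF sEnd = 0.
Proof. unfold uF, sEnd. rewrite Sinv_T by lra. rewrite HrE. apply pw_npos; lra. Qed.

Lemma Sinv_right : forall e, 0 < e -> exists d, 0 < d /\ forall t, s < t < s + d -> Rabs (Sinv t - 0) < e.
Proof.
  intros e He. destruct Hinit as [_ [_ HT0]]. set (e' := Rmin e sE / 2).
  assert (He' : 0 < e' < sE /\ e' < e).
  { unfold e'. pose proof (Rmin_l e sE). pose proof (Rmin_r e sE). assert (0 < Rmin e sE) by (apply Rmin_pos; lra). lra. }
  exists (T e' - s). split. rewrite <- HT0. pose proof (T_incr 0 e' ltac:(lra) ltac:(lra) ltac:(lra)). lra.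
  intros t Ht. assert (T e' <= sEnd) by (unfold sEnd; apply T_le; lra).
  destruct (Sinv_spec t ltac:(lra)) as [H1 _].
  pose proof (Sinv_lt t e' ltac:(lra) ltac:(lra) ltac:(lra)). rewrite Rminus_0_r, Rabs_pos_eq; lra.
Qed.

Lemma Sinv_left : forall e, 0 < e -> exists d, 0 < d /\ forall t, sEnd - d < t < sEnd -> Rabs (Sinv t - sE) < e.
Proof.
  intros e He. destruct Hinit as [_ [_ HT0]]. set (e' := Rmin e sE / 2).
  assert (He' : 0 < e' < sE /\ e' < e).
  { unfold e'. pose proof (Rmin_l e sE). pose proof (Rmin_r e sE). assert (0 < Rmin e sE) by (apply Rmin_pos; lra). lra. }
  exists (sEnd - T (sE - e')). split. unfold sEnd. pose proof (T_incr (sE - e') sE ltac:(lra) ltac:(lra) ltac:(lra)). lra.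
  intros t Ht. assert (s <= T (sE - e')) by (rewrite <- HT0; apply T_le; lra).
  destruct (Sinv_spec t ltac:(lra)) as [H1 _].
  pose proof (Sinv_gt t (sE - e') ltac:(lra) ltac:(lra) ltac:(lra)). rewrite Rabs_minus_sym, Rabs_pos_eq; lra.
Qed.

Lemma comp_right (phi : R -> R) l : continuous phi 0 -> phi 0 = l -> filterlim (fun t => phi (Sinv t)) (at_right s) (locally l).
Proof.
  intros Hc El. subst l. apply lim_right_eps. intros e He.
  destruct (eps_cont phi 0 Hc e He) as [d1 [Hd1 H1]].
  destruct (Sinv_right d1 Hd1) as [d2 [Hd2 H2]].
  exists d2. split; [exact Hd2|]. intros t Ht. apply H1. apply H2. auto.
Qed.
Lemma comp_left (phi : R -> R) l : continuous phi sE -> phi sE = l -> filterlim (fun t => phi (Sinv t)) (at_left sEnd) (locally l).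
Proof.
  intros Hc El. subst l. apply lim_left_eps. intros e He.
  destruct (eps_cont phi sE Hc e He) as [d1 [Hd1 H1]].
  destruct (Sinv_left d1 Hd1) as [d2 [Hd2 H2]].
  exists d2. split; [exact Hd2|]. intros t Ht. apply H1. apply H2. auto.
Qed.

Lemma uF_lims : filterlim uF (at_right s) (locally 0) /\ filterlim uF (at_left sEnd) (locally 0) /\
  filterlim vF (at_right s) (locally w) /\ filterlim vF (at_left sEnd) (locally (V sE)).
Proof.
  destruct Hinit as [Hr0 [HV0 _]].
  assert (Hphi : forall x, continuous (fun x => pw (q + 2) (r x)) x).
  { intros x. apply (continuous_comp r (pw (q + 2))). apply r_cont. apply pw_cont. pose proof q_pos; lra. }
  split. unfold uF. apply (comp_right (fun x => pw (q + 2) (r x))). apply Hphi. rewrite Hr0; apply pw_npos; lra.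
  split. unfold uF. apply (comp_left (fun x => pw (q + 2) (r x))). apply Hphi. rewrite HrE; apply pw_npos; lra.
  split. unfold vF. apply (comp_right V). apply V_cont. auto.
  unfold vF. apply (comp_left V). apply V_cont. auto.
Qed.

End TFrame.

End Flight.

End Model.


Theorem flight_exists (alpha p1 p2 Lp : R) (p : R -> R) :
  0 < alpha < 1 -> p2 <= p1 -> p1 < 0 -> (forall t, p2 <= p t <= p1) -> 0 <= Lp ->
  (forall x y, Rabs (p x - p y) <= Lp * Rabs (x - y)) ->
  exists W, 0 < W /\ forall s w, W <= w ->
  exists s' wl (u v : R -> R), s < s' /\ u s = 0 /\ u s' = 0 /\
   (forall t, s < t < s' -> 0 < u t /\ is_derive u t (v t) /\ is_derive v t (/ Rpower (u t) alpha + p t)) /\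
   filterlim u (at_right s) (locally 0) /\ filterlim u (at_left s') (locally 0) /\
   filterlim v (at_right s) (locally w) /\ filterlim v (at_left s') (locally wl) /\
   wl < 0 /\ P1 p1 * (w * w) <= 2 * P2 p2 * (wl * wl).
Proof.
  intros Ha Hp12 Hp1 Hpb HLp Hpl.
  pose proof (r0_ge1 alpha p1) as Hr0.
  pose proof (del_pos alpha Ha) as Hdel.
  pose proof (U0_pos alpha p1) as HU0.
  assert (HP2 : 0 < P2 p2) by (unfold P2; lra).
  set (W := r0 alpha p1 + 2 * r0 alpha p1 / del alpha + 8 * P2 p2 * U0 alpha p1 + 1).
  assert (Hd : 0 <= 2 * r0 alpha p1 / del alpha) by (apply Rdiv_le_0_compat; lra).
  assert (H8 : 0 <= 8 * P2 p2 * U0 alpha p1) by (apply Rmult_le_pos; [lra|lra]).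
  exists W. split. unfold W; lra.
  intros s w Hw.
  assert (Hw1 : r0 alpha p1 <= w) by (unfold W in Hw; lra).
  assert (Hw3 : 2 * r0 alpha p1 / del alpha <= w) by (unfold W in Hw; lra).
  assert (Hw2 : 8 * P2 p2 * U0 alpha p1 <= w * w).
  { assert (1 <= w) by (unfold W in Hw; lra). assert (w <= w * w) by nra. unfold W in Hw; lra. }
  set (Sg := SF alpha p1 w + 1).
  assert (HRt : 0 < Rt w) by (unfold Rt; lra).
  destruct (picard (G1 alpha) (G2 alpha p (Rt w)) (G3 alpha (Rt w)) (Lc alpha p2 Lp (Rt w)) Sg 0 w s)
    as [r [V [T [Hc [Hr0' [HV0 [HT0 Hd']]]]]]].
  apply Lc_pos with p1; auto.
  { unfold Sg. pose proof (SF_ge alpha p1 Ha Hp1 w Hw1). pose proof (SA_ge alpha p1 Ha w Hw1). lra. }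
  apply G_lip with p1; auto.
  assert (Hder : forall x, 0 < x < Sg ->
    is_derive r x (del alpha * V x) /\ is_derive V x (r x + p (T x) * psi alpha (Rt w) (r x)) /\ is_derive T x (psi alpha (Rt w) (r x))).
  { intros x Hx. exact (Hd' x Hx). }
  assert (Hinit : r 0 = 0 /\ V 0 = w /\ T 0 = s) by auto.
  assert (HSg : SF alpha p1 w < Sg) by (unfold Sg; lra).
  destruct (descent alpha p1 p2 Lp p Ha Hp12 Hp1 Hpb HLp Hpl w s Sg r V T Hw1 Hw2 Hw3 HSg Hc Hinit Hder)
    as [sE [HsE [HrE [HVE [Hsp Hrin]]]]].
  exists (sEnd T sE), (V sE), (uF alpha r T sE), (vF V T sE).
  assert (Hrin' : forall x, 0 < x < sE -> 0 < r x <= w) by (intros x Hx; destruct (Hrin x Hx); lra).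
  split. apply (s_lt_sEnd alpha p w s Sg r V T Hc Hinit Hder sE HsE Hrin').
  split. apply (uF_s alpha p w s Sg r V T Hc Hinit Hder sE HsE Hrin').
  split. apply (uF_sEnd alpha p w s Sg r V T Hc Hinit Hder sE HsE HrE Hrin').
  split. intros t Ht. apply (uF_der alpha p Ha w s Sg r V T Hc Hinit Hder sE HsE Hrin' t Ht).
  destruct (uF_lims alpha p Ha w s Sg r V T Hc Hinit Hder sE HsE HrE Hrin') as [L1 [L2 [L3 L4]]].
  repeat split; auto.
Qed.


Lemma right_ext_loc (f g : R -> R) x l d : 0 < d -> (forall t, x < t < x + d -> f t = g t) ->
  filterlim f (at_right x) (locally l) -> filterlim g (at_right x) (locally l).
Proof.
  intros Hd H. apply filterlim_ext_loc. exists (mkposreal d Hd). intros y Hy Hxy. apply H.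
  unfold ball in Hy; simpl in Hy. unfold AbsRing_ball, abs, minus, plus, opp in Hy; simpl in Hy.
  unfold Rabs in Hy; destruct Rcase_abs in Hy; lra.
Qed.
Lemma left_ext_loc (f g : R -> R) x l d : 0 < d -> (forall t, x - d < t < x -> f t = g t) ->
  filterlim f (at_left x) (locally l) -> filterlim g (at_left x) (locally l).
Proof.
  intros Hd H. apply filterlim_ext_loc. exists (mkposreal d Hd). intros y Hy Hxy. apply H.
  unfold ball in Hy; simpl in Hy. unfold AbsRing_ball, abs, minus, plus, opp in Hy; simpl in Hy.
  unfold Rabs in Hy; destruct Rcase_abs in Hy; lra.
Qed.
Lemma deriv_ext_loc (f g : R -> R) x l d : 0 < d -> (forall t, x - d < t < x + d -> f t = g t) ->
  is_derive f x l -> is_derive g x l.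
Proof.
  intros Hd H. apply is_derive_ext_loc. exists (mkposreal d Hd). intros y Hy. apply H.
  unfold ball in Hy; simpl in Hy. unfold AbsRing_ball, abs, minus, plus, opp in Hy; simpl in Hy.
  unfold Rabs in Hy; destruct Rcase_abs in Hy; lra.
Qed.

Section Chain.
Variables (alpha p1 p2 Lp : R) (p : R -> R).
Hypothesis Ha : 0 < alpha < 1.
Hypothesis Hp12 : p2 <= p1.
Hypothesis Hp1 : p1 < 0.
Hypothesis Hpb : forall t, p2 <= p t <= p1.
Hypothesis HLp : 0 <= Lp.
Hypothesis Hpl : forall x y, Rabs (p x - p y) <= Lp * Rabs (x - y).

Definition kap := P1 p1 / (2 * P2 p2).

Lemma kap_pos : 0 < kap.
Proof. unfold kap, P1, P2. apply Rdiv_lt_0_compat; lra. Qed.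
Lemma kap_le1 : kap <= 1.
Proof. unfold kap, P1, P2. apply (Rmult_le_reg_r (2 * - p2)). lra. unfold Rdiv. rewrite Rmult_assoc, Rinv_l; lra. Qed.

Lemma chain_ind (W : R) :
  0 < W -> vthr alpha p1 p2 < W ->
  (forall s w, W <= w ->
    exists s' wl (u v : R -> R), s < s' /\ u s = 0 /\ u s' = 0 /\
     (forall t, s < t < s' -> 0 < u t /\ is_derive u t (v t) /\ is_derive v t (/ Rpower (u t) alpha + p t)) /\
     filterlim u (at_right s) (locally 0) /\ filterlim u (at_left s') (locally 0) /\
     filterlim v (at_right s) (locally w) /\ filterlim v (at_left s') (locally wl) /\
     wl < 0 /\ P1 p1 * (w * w) <= 2 * P2 p2 * (wl * wl)) ->
  forall n t0 v0, 0 < v0 -> W * W / kap ^ n <= v0 * v0 ->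
    exists (u v : R -> R) (s : nat -> R), bouncing_chain alpha p1 p2 p t0 v0 n u v s.
Proof.
  intros HW Hthr HF. pose proof kap_pos as Hk0. pose proof kap_le1 as Hk1.
  induction n; intros t0 v0 Hv0 Hvv.
  - exists (fun _ => 0), (fun _ => v0), (fun _ => t0).
    unfold bouncing_chain. split. auto. split. intros; lia. split. auto. split. intros; lia.
    split. apply filterlim_const. intros; lia.
  - assert (Hpow : forall m, 0 < kap ^ m <= 1).
    { induction m. simpl; lra. simpl. split. apply Rmult_lt_0_compat; lra.
      assert (kap * kap ^ m <= 1 * 1) by (apply Rmult_le_compat; lra). lra. }
    destruct (Hpow (S n)) as [HkS HkS1]. destruct (Hpow n) as [Hkn Hkn1].
    assert (HWW : W * W <= W * W / kap ^ S n).
    { apply (Rmult_le_reg_r (kap ^ S n)). auto.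
      replace (W * W / kap ^ S n * kap ^ S n) with (W * W) by (field; lra).
      assert (0 <= W * W) by nra. assert (W * W * kap ^ S n <= W * W * 1) by (apply Rmult_le_compat_l; lra). lra. }
    assert (HWv : W <= v0).
    { destruct (Rle_lt_dec W v0); auto. assert (v0 * v0 < W * W) by (apply Rmult_le_0_lt_compat; lra). lra. }
    destruct (HF t0 v0 HWv) as [s' [wl [u [v [Hs' [Hu0 [Hu1 [Hsol [Lu1 [Lu2 [Lv1 [Lv2 [Hwl Hsp]]]]]]]]]]]]].
    assert (HP2 : 0 < P2 p2) by (unfold P2; lra).
    assert (Hkv : kap * (v0 * v0) <= wl * wl).
    { unfold kap. apply (Rmult_le_reg_r (2 * P2 p2)). lra.
      replace (P1 p1 / (2 * P2 p2) * (v0 * v0) * (2 * P2 p2)) with (P1 p1 * (v0 * v0)) by (field; lra). lra. }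
    assert (Hkv2 : W * W / kap ^ n <= (- wl) * (- wl)).
    { replace ((- wl) * (- wl)) with (wl * wl) by ring.
      assert (kap * (W * W / kap ^ S n) <= kap * (v0 * v0)) by (apply Rmult_le_compat_l; lra).
      replace (kap * (W * W / kap ^ S n)) with (W * W / kap ^ n) in H by (simpl; field; lra). lra. }
    destruct (IHn s' (- wl) ltac:(lra) Hkv2) as [u2 [v2 [s2 Hch]]].
    assert (HWW2 : W * W <= W * W / kap ^ n).
    { apply (Rmult_le_reg_r (kap ^ n)). auto.
      replace (W * W / kap ^ n * kap ^ n) with (W * W) by (field; lra).
      assert (0 <= W * W) by nra. assert (W * W * kap ^ n <= W * W * 1) by (apply Rmult_le_compat_l; lra). lra. }
    assert (Hwlw : W <= - wl).
    { destruct (Rle_lt_dec W (- wl)); auto. assert ((- wl) * (- wl) < W * W) by (apply Rmult_le_0_lt_compat; lra). lra. }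
    destruct Hch as [C0 [C1 [C2 [C3 [C4 C5]]]]].
    assert (Hmono : forall j, (j <= n)%nat -> s' <= s2 j).
    { induction j; intros Hj. rewrite C0; lra. pose proof (C1 j ltac:(lia)). pose proof (IHj ltac:(lia)). lra. }
    set (U := fun t => if Rlt_dec t s' then u t else u2 t).
    set (Vv := fun t => if Rlt_dec t s' then v t else v2 t).
    set (S' := fun i => match i with O => t0 | S j => s2 j end).
    assert (EUl : forall t, t < s' -> U t = u t) by (intros t Ht; unfold U; destruct Rlt_dec; [auto| lra]).
    assert (EUr : forall t, s' <= t -> U t = u2 t) by (intros t Ht; unfold U; destruct Rlt_dec; [lra| auto]).
    assert (EVl : forall t, t < s' -> Vv t = v t) by (intros t Ht; unfold Vv; destruct Rlt_dec; [auto| lra]).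
    assert (EVr : forall t, s' <= t -> Vv t = v2 t) by (intros t Ht; unfold Vv; destruct Rlt_dec; [lra| auto]).
    exists U, Vv, S'. unfold bouncing_chain.
    split. reflexivity.
    split.
    { intros i Hi. destruct i. simpl. rewrite C0. auto. simpl. apply C1. lia. }
    split.
    { intros i Hi. destruct i. simpl. rewrite EUl; auto. simpl. rewrite EUr. apply C2. lia. apply Hmono. lia. }
    split.
    { intros i Hi. destruct i.
      - simpl. rewrite C0. split.
        + intros t Ht. destruct (Hsol t Ht) as [P1' [D1 D2]].
          assert (Hd : 0 < Rmin (t - t0) (s' - t)) by (apply Rmin_pos; lra).
          assert (Hloc : forall y, t - Rmin (t - t0) (s' - t) < y < t + Rmin (t - t0) (s' - t) -> y < s').
          { intros y Hy. pose proof (Rmin_r (t - t0) (s' - t)). lra. }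
          split. rewrite EUl; lra. split.
          * rewrite EVl by lra. apply (deriv_ext_loc u U t _ _ Hd). intros y Hy. rewrite EUl; auto. auto.
          * rewrite EUl by lra. apply (deriv_ext_loc v Vv t _ _ Hd). intros y Hy. rewrite EVl; auto. auto.
        + split. apply (right_ext_loc u U t0 0 (s' - t0)). lra. intros y Hy. rewrite EUl; lra. auto.
          split. apply (left_ext_loc u U s' 0 (s' - t0)). lra. intros y Hy. rewrite EUl; lra. auto.
          exists v0, wl. split. apply (right_ext_loc v Vv t0 v0 (s' - t0)). lra. intros y Hy. rewrite EVl; lra. auto.
          split. apply (left_ext_loc v Vv s' wl (s' - t0)). lra. intros y Hy. rewrite EVl; lra. auto. auto.
      - simpl. assert (Hj : (i < n)%nat) by lia.
        destruct (C3 i Hj) as [Sol [Lim1 [Lim2 [win [wout [Lw1 [Lw2 Hwo]]]]]]].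
        pose proof (Hmono i ltac:(lia)) as Hm1. pose proof (C1 i Hj) as Hm2.
        split.
        + intros t Ht. destruct (Sol t Ht) as [Q1 [D1 D2]].
          assert (Hd : 0 < t - s') by lra.
          split. rewrite EUr; lra. split.
          * rewrite EVr by lra. apply (deriv_ext_loc u2 U t _ _ Hd). intros y Hy. rewrite EUr; lra. auto.
          * rewrite EUr by lra. apply (deriv_ext_loc v2 Vv t _ _ Hd). intros y Hy. rewrite EVr; lra. auto.
        + split. apply (right_ext_loc u2 U (s2 i) 0 1). lra. intros y Hy. rewrite EUr; lra. auto.
          split. apply (left_ext_loc u2 U (s2 (S i)) 0 (s2 (S i) - s')). lra. intros y Hy. rewrite EUr; lra. auto.
          exists win, wout. split. apply (right_ext_loc v2 Vv (s2 i) win 1). lra. intros y Hy. rewrite EVr; lra. auto.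
          split. apply (left_ext_loc v2 Vv (s2 (S i)) wout (s2 (S i) - s')). lra. intros y Hy. rewrite EVr; lra. auto. auto. }
    split.
    { apply (right_ext_loc v Vv t0 v0 (s' - t0)). lra. intros y Hy. rewrite EVl; lra. auto. }
    { intros i Hi. destruct i. lia. destruct i.
      - simpl. rewrite C0. exists wl. split.
        apply (left_ext_loc v Vv s' wl (s' - t0)). lra. intros y Hy. rewrite EVl; lra. auto.
        split. apply (right_ext_loc v2 Vv s' (- wl) 1). lra. intros y Hy. rewrite EVr; lra. auto. lra.
      - simpl. destruct (C5 (S i) ltac:(lia)) as [w' [Lw1 [Lw2 Hw']]].
        pose proof (Hmono i ltac:(lia)). pose proof (C1 i ltac:(lia)).
        exists w'. split.
        apply (left_ext_loc v2 Vv (s2 (S i)) w' (s2 (S i) - s')). lra. intros y Hy. rewrite EVr; lra. auto.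
        split. apply (right_ext_loc v2 Vv (s2 (S i)) (- w') 1). lra. intros y Hy. rewrite EVr; lra. auto. auto. }
Qed.
End Chain.

Theorem lemma3p4 (alpha p1 p2 : R) (p : R -> R) :
  0 < alpha < 1 ->
  (exists L : R, forall x y : R, Rabs (p x - p y) <= L * Rabs (x - y)) ->
  p2 <= p1 -> p1 < 0 ->
  (forall t : R, p2 <= p t <= p1) ->
  forall n : nat, exists gamma : R, 0 < gamma /\
    forall t0 v0 : R, gamma < v0 ->
      exists (u v : R -> R) (s : nat -> R),
        bouncing_chain alpha p1 p2 p t0 v0 n u v s.
Proof.
  intros Ha [L HL] Hp12 Hp1 Hpb n.
  assert (HL0 : 0 <= L).
  { specialize (HL 1 0). rewrite Rminus_0_r, Rabs_R1, Rmult_1_r in HL. pose proof (Rabs_pos (p 1 - p 0)). lra. }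
  destruct (flight_exists alpha p1 p2 L p Ha Hp12 Hp1 Hpb HL0 HL) as [W0 [HW0 HF]].
  set (W := W0 + Rabs (vthr alpha p1 p2) + 1).
  assert (HW : 0 < W) by (unfold W; pose proof (Rabs_pos (vthr alpha p1 p2)); lra).
  assert (Hthr : vthr alpha p1 p2 < W) by (unfold W; pose proof (Rle_abs (vthr alpha p1 p2)); lra).
  assert (HF' : forall s w, W <= w ->
    exists s' wl (u v : R -> R), s < s' /\ u s = 0 /\ u s' = 0 /\
     (forall t, s < t < s' -> 0 < u t /\ is_derive u t (v t) /\ is_derive v t (/ Rpower (u t) alpha + p t)) /\
     filterlim u (at_right s) (locally 0) /\ filterlim u (at_left s') (locally 0) /\
     filterlim v (at_right s) (locally w) /\ filterlim v (at_left s') (locally wl) /\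
     wl < 0 /\ P1 p1 * (w * w) <= 2 * P2 p2 * (wl * wl)).
  { intros s w Hw. apply HF. unfold W in Hw; pose proof (Rabs_pos (vthr alpha p1 p2)); lra. }
  pose proof (kap_pos p1 p2 Hp12 Hp1) as Hk0. pose proof (kap_le1 p1 p2 Hp12 Hp1) as Hk1.
  assert (Hkn : 0 < kap p1 p2 ^ n <= 1).
  { clear -Hk0 Hk1. induction n. simpl; lra. simpl. split. apply Rmult_lt_0_compat; lra.
    assert (kap p1 p2 * kap p1 p2 ^ n <= 1 * 1) by (apply Rmult_le_compat; lra). lra. }
  exists (W / kap p1 p2 ^ n). split. apply Rdiv_lt_0_compat; lra.
  intros t0 v0 Hv0.
  assert (Hg : W <= W / kap p1 p2 ^ n).
  { apply (Rmult_le_reg_r (kap p1 p2 ^ n)). lra.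
    replace (W / kap p1 p2 ^ n * kap p1 p2 ^ n) with W by (field; lra).
    assert (W * kap p1 p2 ^ n <= W * 1) by (apply Rmult_le_compat_l; lra). lra. }
  apply (chain_ind alpha p1 p2 p Hp12 Hp1 W HW Hthr HF' n t0 v0). lra.
  set (K := kap p1 p2 ^ n) in *.
  assert (E : W * W / K = (W / K) * (W / K) * K) by (field; lra).
  rewrite E.
  assert ((W / K) * (W / K) <= v0 * v0) by (apply Rmult_le_compat; lra).
  assert ((W / K) * (W / K) * K <= (W / K) * (W / K) * 1) by (apply Rmult_le_compat_l; [nra| lra]).
  lra.
Qed.
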